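(* Let $\Gamma_L$, $\Gamma_R$ and $\psi$ be $\Delta_0$ formulas, and let $C = \mathrm{FV}(\Gamma_L) \cap (\mathrm{FV}(\Gamma_R)\cup\mathrm{FV}(\psi))$. If $\Gamma_L, \Gamma_R \models \psi$, then there is a $\Delta_0$ formula $\theta$ with $\mathrm{FV}(\theta)\subseteq C$ such that $\Gamma_L\models\theta$ and $\Gamma_R,\theta\models\psi$.
   Context: Types: $T,U ::= \mathfrak U \mid \mathsf{Unit}\mid T\times U\mid \mathsf{Set}(T)$ interpreted as nested relations (atoms, the one-element set, products, all subsets). Terms: $x \mid \langle\rangle \mid \langle t,u\rangle \mid \pi_1(t)\mid\pi_2(t)$. $\Delta_0$ formulas: $t =_{\mathfrak U} u \mid t \neq_{\mathfrak U} u \mid \top \mid \bot \mid \varphi\vee\psi \mid \varphi\wedge\psi \mid \forall x \in t\,\varphi \mid \exists x\in t\,\varphi$ (bounded quantification over terms of set type); negation is defined by dualization. $\Gamma\models\psi$ means every assignment of nested relations (finite or infinite) to the free variables satisfying all formulas in $\Gamma$ satisfies $\psi$ (equivalently, for $\Delta_0$ formulas, every typed first-order model in which projections and tupling commute). *)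

(* Defs.v *)
From Stdlib Require Import List Arith.
Import ListNotations.

Inductive ty : Type :=
| TUr : ty
| TUnit : ty
| TProd : ty -> ty -> ty
| TSet : ty -> ty.

Definition ty_eq_dec : forall T S : ty, {T = S} + {T <> S}.
Proof. decide equality. Defined.

Definition var : Type := (nat * ty)%type.

Inductive term : ty -> Type :=
| tvar : forall (n : nat) (T : ty), term T
| tunit : term TUnit
| tpair : forall T S, term T -> term S -> term (TProd T S)
| tpi1 : forall T S, term (TProd T S) -> term T
| tpi2 : forall T S, term (TProd T S) -> term S.

(* Delta_0 formulas; the bounded quantifiers bind the variable (n, T)
   ranging over the elements of a term of type Set(T). *)
Inductive formula : Type :=
| fEq : term TUr -> term TUr -> formula
| fNeq : term TUr -> term TUr -> formula
| fTop : formula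
| fBot : formula
| fOr : formula -> formula -> formula
| fAnd : formula -> formula -> formula
| fAll : forall (n : nat) (T : ty), term (TSet T) -> formula -> formula
| fEx : forall (n : nat) (T : ty), term (TSet T) -> formula -> formula.

(* Semantics over an atom domain A: nested relations (all subsets). *)
Fixpoint interp (A : Type) (T : ty) : Type :=
  match T with
  | TUr => A
  | TUnit => unit
  | TProd T1 T2 => (interp A T1 * interp A T2)%type
  | TSet T1 => interp A T1 -> Prop
  end.

Definition env (A : Type) : Type := forall (n : nat) (T : ty), interp A T.

Definition upd {A : Type} (e : env A) (n : nat) (T : ty) (a : interp A T) : env A :=
  fun m S =>
    match Nat.eq_dec n m, ty_eq_dec T S with
    | left _, left eTS => eq_rect T (interp A) a S eTS
    | _, _ => e m S
    end.

Fixpoint teval {A : Type} (e : env A) {T : ty} (t : term T) : interp A T :=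
  match t in term T return interp A T with
  | tvar n T => e n T
  | tunit => tt
  | tpair _ _ t1 t2 => (teval e t1, teval e t2)
  | tpi1 _ _ t1 => fst (teval e t1)
  | tpi2 _ _ t1 => snd (teval e t1)
  end.

Fixpoint sat {A : Type} (e : env A) (phi : formula) : Prop :=
  match phi with
  | fEq t u => teval e t = teval e u
  | fNeq t u => teval e t <> teval e u
  | fTop => True
  | fBot => False
  | fOr p q => sat e p \/ sat e q
  | fAnd p q => sat e p /\ sat e q
  | fAll n T t p => forall a : interp A T, teval e t a -> sat (upd e n T a) p
  | fEx n T t p => exists a : interp A T, teval e t a /\ sat (upd e n T a) p
  end.

Definition entails (Gamma : list formula) (psi : formula) : Prop :=
  forall (A : Type) (e : env A),
    (forall g, In g Gamma -> sat e g) -> sat e psi.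

Fixpoint tFV {T : ty} (t : term T) (v : var) : Prop :=
  match t with
  | tvar n T0 => v = (n, T0)
  | tunit => False
  | tpair _ _ t1 t2 => tFV t1 v \/ tFV t2 v
  | tpi1 _ _ t1 => tFV t1 v
  | tpi2 _ _ t1 => tFV t1 v
  end.

Fixpoint FV (phi : formula) (v : var) : Prop :=
  match phi with
  | fEq t u | fNeq t u => tFV t v \/ tFV u v
  | fTop | fBot => False
  | fOr p q | fAnd p q => FV p v \/ FV q v
  | fAll n T t p | fEx n T t p => tFV t v \/ (FV p v /\ v <> (n, T))
  end.

Definition FVs (Gamma : list formula) (v : var) : Prop :=
  exists g, In g Gamma /\ FV g v.

(* Main.v *)
Require Import Defs.
From Stdlib Require Import List Arith Lia Classical ClassicalEpsilon Eqdep_dec Relations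
  FunctionalExtensionality PropExtensionality.
Import ListNotations.

Definition var_eq_dec : forall v w : var, {v = w} + {v <> w}.
Proof. decide equality; [apply ty_eq_dec | apply Nat.eq_dec]. Defined.

Lemma ty_UIP : forall (T : ty) (p : T = T), p = eq_refl.
Proof. intros. apply (UIP_dec ty_eq_dec). Qed.

Lemma upd_same A (e : env A) n T a : upd e n T a n T = a.
Proof.
  unfold upd. destruct (Nat.eq_dec n n); [|congruence].
  destruct (ty_eq_dec T T) as [E|]; [|congruence]. rewrite (ty_UIP T E). reflexivity.
Qed.

Lemma upd_other A (e : env A) n T a m S : (n,T) <> (m,S) -> upd e n T a m S = e m S.
Proof.
  unfold upd. intros H. destruct (Nat.eq_dec n m), (ty_eq_dec T S); subst; try reflexivity.
  congruence.
Qed.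

Lemma teval_coinc A (e e' : env A) T (t : term T) :
  (forall n S, tFV t (n,S) -> e n S = e' n S) -> teval e t = teval e' t.
Proof.
  induction t; simpl; intros H.
  - apply H. reflexivity.
  - reflexivity.
  - rewrite IHt1, IHt2; auto.
  - rewrite IHt; auto.
  - rewrite IHt; auto.
Qed.

Ltac updcase H := match goal with |- upd ?e ?n ?T ?a ?m ?S = upd ?e' ?n ?T ?a ?m ?S =>
  destruct (var_eq_dec (n,T) (m,S)) as [?E|?E];
  [ injection E; intros; subst; rewrite !upd_same; reflexivity
  | rewrite !upd_other by auto; first [apply H | symmetry; apply H]; right; split; auto ] end.

Lemma sat_coinc A (phi : formula) : forall (e e' : env A),
  (forall n S, FV phi (n,S) -> e n S = e' n S) -> (sat e phi <-> sat e' phi).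
Proof.
  induction phi; simpl; intros e e' H.
  - rewrite (teval_coinc _ e e' _ t), (teval_coinc _ e e' _ t0); auto; tauto.
  - rewrite (teval_coinc _ e e' _ t), (teval_coinc _ e e' _ t0); auto; tauto.
  - tauto.
  - tauto.
  - rewrite (IHphi1 e e'), (IHphi2 e e'); auto; tauto.
  - rewrite (IHphi1 e e'), (IHphi2 e e'); auto; tauto.
  - rewrite (teval_coinc _ e e' _ t) by auto.
    split; intros Hq a Ha; specialize (Hq a Ha);
      (eapply IHphi; [|exact Hq]); intros m S Hm;
      updcase H.
  - rewrite (teval_coinc _ e e' _ t) by auto.
    split; intros [a [Ha Hq]]; exists a; split; auto;
      (eapply IHphi; [|exact Hq]); intros m S Hm;
      updcase H.
Qed.

Lemma sat_ext A (phi : formula) (e e' : env A) :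
  (forall n S, e n S = e' n S) -> (sat e phi <-> sat e' phi).
Proof. intros; apply sat_coinc; auto. Qed.

Fixpoint neg (phi : formula) : formula :=
  match phi with
  | fEq t u => fNeq t u
  | fNeq t u => fEq t u
  | fTop => fBot
  | fBot => fTop
  | fOr p q => fAnd (neg p) (neg q)
  | fAnd p q => fOr (neg p) (neg q)
  | fAll n T t p => fEx n T t (neg p)
  | fEx n T t p => fAll n T t (neg p)
  end.

Lemma sat_neg A (phi : formula) : forall (e : env A), sat e (neg phi) <-> ~ sat e phi.
Proof.
  induction phi; simpl; intros e.
  - tauto.
  - split; [tauto|]. intros H; apply NNPP; exact H.
  - tauto.
  - tauto.
  - rewrite IHphi1, IHphi2; tauto.
  - rewrite IHphi1, IHphi2. split; [tauto|]. intros H. apply not_and_or in H. tauto.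
  - split.
    + intros [a [Ha Hn]] Hall. apply IHphi in Hn. apply Hn, Hall, Ha.
    + intros Hn. apply NNPP. intros Hc. apply Hn. intros a Ha. apply NNPP. intros Hp.
      apply Hc. exists a. split; auto. apply IHphi; auto.
  - split.
    + intros Hall [a [Ha Hp]]. specialize (Hall a Ha). apply IHphi in Hall. auto.
    + intros Hn a Ha. apply IHphi. intros Hp. apply Hn. exists a; auto.
Qed.

Lemma FV_neg phi v : FV (neg phi) v <-> FV phi v.
Proof. induction phi; simpl; try tauto; rewrite ?IHphi1, ?IHphi2, ?IHphi; tauto. Qed.

Fixpoint tren (n : nat) (T : ty) (m : nat) {S} (t : term S) : term S :=
  match t in term S0 return term S0 with
  | tvar k S0 => if Nat.eq_dec k n then if ty_eq_dec S0 T then tvar m S0 else tvar k S0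
                 else tvar k S0
  | tunit => tunit
  | tpair _ _ a b => tpair _ _ (tren n T m a) (tren n T m b)
  | tpi1 _ _ a => tpi1 _ _ (tren n T m a)
  | tpi2 _ _ a => tpi2 _ _ (tren n T m a)
  end.

Fixpoint ren (n : nat) (T : ty) (m : nat) (phi : formula) : formula :=
  match phi with
  | fEq t u => fEq (tren n T m t) (tren n T m u)
  | fNeq t u => fNeq (tren n T m t) (tren n T m u)
  | fTop => fTop
  | fBot => fBot
  | fOr p q => fOr (ren n T m p) (ren n T m q)
  | fAnd p q => fAnd (ren n T m p) (ren n T m q)
  | fAll k U t p => fAll k U (tren n T m t)
      (if Nat.eq_dec k n then if ty_eq_dec U T then p else ren n T m p else ren n T m p)
  | fEx k U t p => fEx k U (tren n T m t)
      (if Nat.eq_dec k n then if ty_eq_dec U T then p else ren n T m p else ren n T m p)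
  end.

Fixpoint bnd (phi : formula) (v : var) : Prop :=
  match phi with
  | fOr p q | fAnd p q => bnd p v \/ bnd q v
  | fAll k U _ p | fEx k U _ p => v = (k,U) \/ bnd p v
  | _ => False
  end.

Fixpoint fsize (phi : formula) : nat :=
  match phi with
  | fOr p q | fAnd p q => S (fsize p + fsize q)
  | fAll _ _ _ p | fEx _ _ _ p => S (fsize p)
  | _ => 0
  end.

Lemma fsize_ren n T m phi : fsize (ren n T m phi) = fsize phi.
Proof.
  induction phi; simpl; auto;
  repeat (destruct Nat.eq_dec; simpl; auto); repeat (destruct ty_eq_dec; simpl; auto).
Qed.

Lemma bnd_ren n T m phi v : bnd (ren n T m phi) v -> bnd phi v.
Proof.
  induction phi; simpl; auto; try tauto;
  repeat (destruct Nat.eq_dec; simpl; auto); repeat (destruct ty_eq_dec; simpl; auto); tauto.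
Qed.

Lemma teval_ren A (e : env A) n T m S (t : term S) :
  teval e (tren n T m t) = teval (upd e n T (e m T)) t.
Proof.
  induction t; simpl; try congruence.
  destruct (Nat.eq_dec n0 n); [destruct (ty_eq_dec T0 T)|]; subst; simpl.
  - rewrite upd_same; auto.
  - rewrite upd_other; auto. congruence.
  - rewrite upd_other; auto. congruence.
Qed.

Lemma tFV_ren n T m S (t : term S) v :
  tFV (tren n T m t) v -> (tFV t v /\ v <> (n,T)) \/ v = (m,T).
Proof.
  induction t; simpl; try tauto.
  - destruct (Nat.eq_dec n0 n); [destruct (ty_eq_dec T0 T)|]; subst; simpl; intros; subst; auto.
    + left; split; auto; congruence.
    + left; split; auto; congruence.
Qed.

Lemma FV_ren n T m phi v :
  FV (ren n T m phi) v -> (FV phi v /\ v <> (n,T)) \/ v = (m,T).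
Proof.
  induction phi; simpl;
  try (intros [H|H]; apply tFV_ren in H; tauto); try tauto.
  all: intros [H|[H1 H2]]; [apply tFV_ren in H; tauto|].
  all: destruct (Nat.eq_dec n0 n); [destruct (ty_eq_dec T0 T)|]; subst;
    [ left; split; auto
    | apply IHphi in H1; destruct H1 as [[? ?]|?]; auto
    | apply IHphi in H1; destruct H1 as [[? ?]|?]; auto ].
Qed.

Lemma upd_shadow A (e : env A) n T a b : forall m S, upd (upd e n T b) n T a m S = upd e n T a m S.
Proof.
  intros m S. destruct (var_eq_dec (n,T) (m,S)) as [E|E].
  - injection E; intros; subst. rewrite !upd_same; auto.
  - rewrite !upd_other; auto.
Qed.

Lemma upd_comm A (e : env A) n T a k S b : (n,T) <> (k,S) ->
  forall m R, upd (upd e n T a) k S b m R = upd (upd e k S b) n T a m R.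
Proof.
  intros H m R. destruct (var_eq_dec (n,T) (m,R)) as [E|E].
  - injection E; intros; subst. rewrite upd_same, upd_other, upd_same; auto.
  - rewrite (upd_other _ _ n T a m R) by auto.
    destruct (var_eq_dec (k,S) (m,R)) as [E2|E2].
    + injection E2; intros; subst. rewrite !upd_same; auto.
    + rewrite !upd_other; auto.
Qed.

Lemma sat_ren A phi : forall (e : env A) n T m, ~ bnd phi (m,T) ->
  (sat e (ren n T m phi) <-> sat (upd e n T (e m T)) phi).
Proof.
  induction phi; simpl; intros e n0 T0 m Hb; rewrite ?teval_ren; try tauto.
  - rewrite IHphi1, IHphi2 by tauto; tauto.
  - rewrite IHphi1, IHphi2 by tauto; tauto.
  - destruct (var_eq_dec (n,T) (n0,T0)) as [E|E].
    + injection E; intros; subst. destruct (Nat.eq_dec n0 n0); [|congruence].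
      destruct (ty_eq_dec T0 T0); [|congruence]. simpl.
      split; intros H a Ha; specialize (H a Ha); (eapply sat_ext; [|exact H]);
        intros; rewrite upd_shadow; auto.
    + assert (HX : (if Nat.eq_dec n n0 then if ty_eq_dec T T0 then phi else ren n0 T0 m phi
                    else ren n0 T0 m phi) = ren n0 T0 m phi).
      { destruct (Nat.eq_dec n n0); [destruct (ty_eq_dec T T0)|]; subst; auto. congruence. }
      rewrite HX. simpl.
      split; intros H a Ha; specialize (H a Ha).
      * apply IHphi in H; [|tauto]. rewrite upd_other in H by (intro; apply Hb; auto).
        eapply sat_ext; [|exact H]. intros; apply upd_comm; auto.
      * apply IHphi; [tauto|]. rewrite upd_other by (intro; apply Hb; auto).
        eapply sat_ext; [|exact H]. intros; symmetry; apply upd_comm; auto.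
  - destruct (var_eq_dec (n,T) (n0,T0)) as [E|E].
    + injection E; intros; subst. destruct (Nat.eq_dec n0 n0); [|congruence].
      destruct (ty_eq_dec T0 T0); [|congruence]. simpl.
      split; intros [a [Ha H]]; exists a; split; auto; (eapply sat_ext; [|exact H]);
        intros; rewrite upd_shadow; auto.
    + assert (HX : (if Nat.eq_dec n n0 then if ty_eq_dec T T0 then phi else ren n0 T0 m phi
                    else ren n0 T0 m phi) = ren n0 T0 m phi).
      { destruct (Nat.eq_dec n n0); [destruct (ty_eq_dec T T0)|]; subst; auto. congruence. }
      rewrite HX. simpl.
      split; intros [a [Ha H]]; exists a; split; auto.
      * apply IHphi in H; [|tauto]. rewrite upd_other in H by (intro; apply Hb; auto).
        eapply sat_ext; [|exact H]. intros; apply upd_comm; auto.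
      * apply IHphi; [tauto|]. rewrite upd_other by (intro; apply Hb; auto).
        eapply sat_ext; [|exact H]. intros; symmetry; apply upd_comm; auto.
Qed.

Inductive nterm : Type :=
| NPath : var -> list bool -> nterm
| NUnit : nterm
| NPair : nterm -> nterm -> nterm.

Definition nterm_eq_dec : forall a b : nterm, {a = b} + {a <> b}.
Proof. decide equality; [apply list_eq_dec; apply Bool.bool_dec | apply var_eq_dec]. Defined.

Definition nproj (b : bool) (n : nterm) : nterm :=
  match n with
  | NPair x y => if b then x else y
  | NPath v bs => NPath v (bs ++ [b])
  | NUnit => NUnit
  end.

Fixpoint tnorm {T} (t : term T) : nterm :=
  match t with
  | tvar n T => NPath (n,T) []
  | tunit => NUnit
  | tpair _ _ a b => NPair (tnorm a) (tnorm b)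
  | tpi1 _ _ a => nproj true (tnorm a)
  | tpi2 _ _ a => nproj false (tnorm a)
  end.

Fixpoint varsN (n : nterm) (v : var) : Prop :=
  match n with
  | NPath w _ => v = w
  | NUnit => False
  | NPair a b => varsN a v \/ varsN b v
  end.

Lemma varsN_nproj b n v : varsN (nproj b n) v -> varsN n v.
Proof. destruct n; simpl; auto. destruct b; auto. Qed.

Lemma varsN_tnorm T (t : term T) v : varsN (tnorm t) v -> tFV t v.
Proof.
  induction t; simpl; auto; intros; try (apply varsN_nproj in H; auto). tauto.
Qed.

Definition dv (A : Type) := {T : ty & interp A T}.

Definition dproj {A} (b : bool) (d : option (dv A)) : option (dv A) :=
  match d with
  | Some (existT _ T v) =>
      match T return interp A T -> option (dv A) with
      | TProd T1 T2 => fun v => Some (if b then existT _ T1 (fst v) else existT _ T2 (snd v))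
      | _ => fun _ => None
      end v
  | None => None
  end.

Fixpoint deval {A} (e : env A) (n : nterm) : option (dv A) :=
  match n with
  | NPath v bs => fold_left (fun o b => dproj b o) bs (Some (existT _ (snd v) (e (fst v) (snd v))))
  | NUnit => Some (existT _ TUnit tt)
  | NPair a b =>
      match deval e a, deval e b with
      | Some (existT _ T1 v1), Some (existT _ T2 v2) => Some (existT _ (TProd T1 T2) (v1, v2))
      | _, _ => None
      end
  end.

Lemma existT_ty_inj A T (x y : interp A T) : existT (interp A) T x = existT _ T y -> x = y.
Proof. intros H. apply (inj_pair2_eq_dec ty ty_eq_dec) in H. exact H. Qed.

Lemma deval_nproj A (e : env A) n T1 T2 (v : interp A (TProd T1 T2)) b :
  deval e n = Some (existT _ (TProd T1 T2) v) ->
  deval e (nproj b n) = Some (if b then existT _ T1 (fst v) else existT _ T2 (snd v)).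
Proof.
  destruct n as [w bs| |x y]; simpl; intros H.
  - rewrite fold_left_app. simpl. rewrite H. reflexivity.
  - inversion H.
  - destruct (deval e x) as [[T1' v1]|] eqn:Ex; [|discriminate].
    destruct (deval e y) as [[T2' v2]|] eqn:Ey; [|discriminate].
    assert (HT : TProd T1' T2' = TProd T1 T2) by (apply (f_equal (fun o => match o with Some d => projT1 d | None => TUnit end)) in H; exact H).
    inversion HT; subst.
    apply (f_equal (fun o => match o with Some d => d | None => existT (interp A) TUnit tt end)) in H.
    apply existT_ty_inj in H. subst. destruct b; simpl; auto.
Qed.

Lemma deval_tnorm A (e : env A) T (t : term T) :
  deval e (tnorm t) = Some (existT _ T (teval e t)).
Proof.
  induction t; simpl.
  - reflexivity.
  - reflexivity.
  - rewrite IHt1, IHt2. reflexivity.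
  - rewrite (deval_nproj _ _ _ _ _ _ true IHt). reflexivity.
  - rewrite (deval_nproj _ _ _ _ _ _ false IHt). reflexivity.
Qed.

Lemma key_eq A (e : env A) T (t u : term T) : tnorm t = tnorm u -> teval e t = teval e u.
Proof.
  intros H. pose proof (deval_tnorm A e T t) as H1. pose proof (deval_tnorm A e T u) as H2.
  rewrite H in H1. rewrite H1 in H2.
  apply (f_equal (fun o => match o with Some d => d | None => existT (interp A) TUnit tt end)) in H2.
  apply existT_ty_inj in H2. auto.
Qed.

Definition tproj (b : bool) (d : option {T : ty & term T}) : option {T : ty & term T} :=
  match d with
  | Some (existT _ T w) =>
      match T return term T -> option {T : ty & term T} with
      | TProd T1 T2 => fun w => Some (if b then existT _ T1 (tpi1 T1 T2 w) else existT _ T2 (tpi2 T1 T2 w))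
      | _ => fun _ => None
      end w
  | None => None
  end.

Fixpoint tbuild (n : nterm) : option {T : ty & term T} :=
  match n with
  | NPath v bs => fold_left (fun o b => tproj b o) bs (Some (existT _ (snd v) (tvar (fst v) (snd v))))
  | NUnit => Some (existT _ TUnit tunit)
  | NPair a b =>
      match tbuild a, tbuild b with
      | Some (existT _ T1 v1), Some (existT _ T2 v2) => Some (existT _ (TProd T1 T2) (tpair T1 T2 v1 v2))
      | _, _ => None
      end
  end.

Lemma tbuild_path_inv v bs : forall T u, 
  fold_left (fun o b => tproj b o) bs (Some (existT _ (snd v) (tvar (fst v) (snd v)))) = Some (existT _ T u) ->
  tnorm u = NPath v bs /\ (forall w, tFV u w -> w = v).
Proof.
  induction bs as [|b bs IH] using rev_ind; simpl; intros T u H.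
  - apply (f_equal (fun o => match o with Some d => d | None => existT term TUnit tunit end)) in H.
    pose proof (eq_sigT_fst H) as E. simpl in E. subst.
    apply (inj_pair2_eq_dec ty ty_eq_dec) in H. subst. simpl. destruct v; split; auto.
  - rewrite fold_left_app in H. simpl in H.
    destruct (fold_left (fun o b => tproj b o) bs (Some (existT _ (snd v) (tvar (fst v) (snd v)))))
      as [[T' w]|] eqn:E; [|discriminate].
    destruct (IH _ _ eq_refl) as [H1 H2].
    simpl in H. destruct T'; try discriminate.
    destruct b; apply (f_equal (fun o => match o with Some d => d | None => existT term TUnit tunit end)) in H; rename H into H3; pose proof (eq_sigT_fst H3) as E3; simpl in E3; subst;
      apply (inj_pair2_eq_dec ty ty_eq_dec) in H3; subst; simpl; rewrite H1; simpl; split; auto.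
Qed.

Lemma tbuild_inv n : forall T u, tbuild n = Some (existT _ T u) ->
  tnorm u = n /\ (forall w, tFV u w -> varsN n w).
Proof.
  induction n as [v bs| |x IHx y IHy]; simpl; intros T u H.
  - apply tbuild_path_inv in H. destruct H as [H1 H2]. split; auto.
  - apply (f_equal (fun o => match o with Some d => d | None => existT term TUnit tunit end)) in H; rename H into H'; pose proof (eq_sigT_fst H') as E; simpl in E; subst.
    apply (inj_pair2_eq_dec ty ty_eq_dec) in H'. subst. simpl. split; auto.
  - destruct (tbuild x) as [[T1 v1]|] eqn:Ex; [|discriminate].
    destruct (tbuild y) as [[T2 v2]|] eqn:Ey; [|discriminate].
    destruct (IHx _ _ eq_refl) as [Ha1 Hb1]. destruct (IHy _ _ eq_refl) as [Ha2 Hb2].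
    apply (f_equal (fun o => match o with Some d => d | None => existT term TUnit tunit end)) in H; rename H into H'; pose proof (eq_sigT_fst H') as E; simpl in E; subst.
    apply (inj_pair2_eq_dec ty ty_eq_dec) in H'. subst. simpl. split; auto.
    intros w [Hw|Hw]; auto.
Qed.

Lemma tbuild_nproj n T1 T2 (w : term (TProd T1 T2)) b :
  tbuild n = Some (existT _ (TProd T1 T2) w) ->
  exists u, tbuild (nproj b n) = Some (existT _ (if b then T1 else T2) u).
Proof.
  destruct n as [v bs| |x y]; intros H; simpl in H.
  - simpl. rewrite fold_left_app. simpl. rewrite H. destruct b; eexists; reflexivity.
  - inversion H.
  - destruct (tbuild x) as [[T1' v1]|] eqn:Ex; [|discriminate].
    destruct (tbuild y) as [[T2' v2]|] eqn:Ey; [|discriminate].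
    assert (HT : TProd T1' T2' = TProd T1 T2) by (apply (f_equal (fun o => match o with Some d => projT1 d | None => TUnit end)) in H; exact H).
    inversion HT; subst. destruct b; cbn [nproj]; eexists; eauto.
Qed.

Lemma tbuild_tnorm T (t : term T) : exists u, tbuild (tnorm t) = Some (existT _ T u).
Proof.
  induction t; simpl.
  - eexists; reflexivity.
  - eexists; reflexivity.
  - destruct IHt1 as [u1 H1], IHt2 as [u2 H2]. rewrite H1, H2. eexists; reflexivity.
  - destruct IHt as [w H]. apply (tbuild_nproj _ _ _ _ true H).
  - destruct IHt as [w H]. apply (tbuild_nproj _ _ _ _ false H).
Qed.

Lemma clean T (t : term T) : exists u : term T,
  tnorm u = tnorm t /\ (forall w, tFV u w -> varsN (tnorm t) w) /\
  (forall A (e : env A), teval e u = teval e t).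
Proof.
  destruct (tbuild_tnorm T t) as [u H]. apply tbuild_inv in H. destruct H as [H1 H2].
  exists u. split; [|split]; auto. intros; apply key_eq; auto.
Qed.

Fixpoint eqv {A} (T : ty) : interp A T -> interp A T -> Prop :=
  match T return interp A T -> interp A T -> Prop with
  | TUr => fun a b => a = b
  | TUnit => fun _ _ => True
  | TProd T1 T2 => fun a b => eqv T1 (fst a) (fst b) /\ eqv T2 (snd a) (snd b)
  | TSet T1 => fun a b => (forall x, a x -> exists y, b y /\ eqv T1 x y) /\
                         (forall y, b y -> exists x, a x /\ eqv T1 x y)
  end.

Lemma eqv_refl A T : forall (a : interp A T), eqv T a a.
Proof.
  induction T; simpl; intros; auto.
  split; intros x Hx; exists x; split; auto.
Qed.

Definition eqv_env {A} (e e' : env A) := forall n T, eqv T (e n T) (e' n T).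

Lemma teval_eqv A (e e' : env A) T (t : term T) : eqv_env e e' -> eqv T (teval e t) (teval e' t).
Proof.
  intros H. induction t; simpl; auto; try (split; auto); try (destruct IHt; auto).
Qed.

Lemma eqv_env_upd A (e e' : env A) n T a a' :
  eqv_env e e' -> eqv T a a' -> eqv_env (upd e n T a) (upd e' n T a').
Proof.
  intros H Ha m S. destruct (var_eq_dec (n,T) (m,S)) as [E|E].
  - injection E; intros; subst. rewrite !upd_same; auto.
  - rewrite !upd_other; auto.
Qed.

Lemma sat_eqv A phi : forall (e e' : env A), eqv_env e e' -> sat e phi -> sat e' phi.
Proof.
  induction phi; simpl; intros e e' H.
  - pose proof (teval_eqv _ _ _ _ t H). pose proof (teval_eqv _ _ _ _ t0 H). simpl in *. congruence.
  - pose proof (teval_eqv _ _ _ _ t H). pose proof (teval_eqv _ _ _ _ t0 H). simpl in *. congruence.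
  - auto.
  - auto.
  - intros [Hp|Hq]; [left; eapply IHphi1 | right; eapply IHphi2]; eauto.
  - intros [Hp Hq]; split; [eapply IHphi1 | eapply IHphi2]; eauto.
  - intros Hall a' Ha'. destruct (teval_eqv _ _ _ _ t H) as [H1 H2].
    destruct (H2 a' Ha') as [x [Hx Hxa]].
    eapply IHphi; [|apply Hall, Hx]. apply eqv_env_upd; auto.
  - intros [a [Ha Hp]]. destruct (teval_eqv _ _ _ _ t H) as [H1 H2].
    destruct (H1 a Ha) as [y [Hy Hay]]. exists y. split; auto.
    eapply IHphi; [|exact Hp]. apply eqv_env_upd; auto.
Qed.

Fixpoint EqvF (T : ty) (k : nat) : term T -> term T -> formula :=
  match T return term T -> term T -> formula with
  | TUr => fun a b => fEq a b
  | TUnit => fun _ _ => fTop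
  | TProd T1 T2 => fun a b => fAnd (EqvF T1 k (tpi1 T1 T2 a) (tpi1 T1 T2 b))
                                  (EqvF T2 k (tpi2 T1 T2 a) (tpi2 T1 T2 b))
  | TSet T1 => fun a b =>
      fAnd (fAll k T1 a (fEx (S k) T1 b (EqvF T1 (S (S k)) (tvar k T1) (tvar (S k) T1))))
           (fAll k T1 b (fEx (S k) T1 a (EqvF T1 (S (S k)) (tvar (S k) T1) (tvar k T1))))
  end.

Lemma teval_upd_fresh A (e : env A) n T a S (t : term S) :
  (forall v, tFV t v -> v <> (n,T)) -> teval (upd e n T a) t = teval e t.
Proof.
  intros H. apply teval_coinc. intros m R Hm. apply upd_other. intro E; apply (H _ Hm). auto.
Qed.

Lemma sat_upd_fresh A (e : env A) n T a phi :
  (forall v, FV phi v -> v <> (n,T)) -> (sat (upd e n T a) phi <-> sat e phi).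
Proof.
  intros H. apply sat_coinc. intros m R Hm. apply upd_other. intro E; apply (H _ Hm). auto.
Qed.

Lemma EqvF_sem T : forall k (a b : term T) A (e : env A),
  (forall v, tFV a v \/ tFV b v -> fst v < k) ->
  (sat e (EqvF T k a b) <-> eqv T (teval e a) (teval e b)).
Proof.
  induction T; intros k a b A e Hk; simpl.
  - tauto.
  - tauto.
  - rewrite IHT1, IHT2 by (simpl; auto). simpl. tauto.
  - assert (HI : forall x y, sat (upd (upd e k T x) (S k) T y)
                   (EqvF T (S (S k)) (tvar k T) (tvar (S k) T)) <-> eqv T x y).
    { intros x y. rewrite IHT by (simpl; intros v [Hv|Hv]; subst; simpl; lia). simpl.
      rewrite upd_same, upd_other by (intro E; injection E; lia). rewrite upd_same. tauto. }
    assert (HI' : forall x y, sat (upd (upd e k T x) (S k) T y)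
                   (EqvF T (S (S k)) (tvar (S k) T) (tvar k T)) <-> eqv T y x).
    { intros x y. rewrite IHT by (simpl; intros v [Hv|Hv]; subst; simpl; lia). simpl.
      rewrite upd_same, upd_other by (intro E; injection E; lia). rewrite upd_same. tauto. }
    assert (Ha : forall x, teval (upd e k T x) a = teval e a).
    { intros x. apply teval_upd_fresh. intros v Hv E. subst. specialize (Hk _ (or_introl Hv)). simpl in Hk. lia. }
    assert (Hb : forall x, teval (upd e k T x) b = teval e b).
    { intros x. apply teval_upd_fresh. intros v Hv E. subst. specialize (Hk _ (or_intror Hv)). simpl in Hk. lia. }
    split.
    + intros [H1 H2]. split.
      * intros x Hx. destruct (H1 x Hx) as [y [Hy Hxy]]. rewrite Hb in Hy. exists y. split; auto.
        apply HI; auto.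
      * intros y Hy. destruct (H2 y Hy) as [x [Hx Hxy]]. rewrite Ha in Hx. exists x. split; auto.
        apply HI' in Hxy; auto.
    + intros [H1 H2]. split.
      * intros x Hx. destruct (H1 x Hx) as [y [Hy Hxy]]. exists y. rewrite Hb. split; auto.
        apply HI; auto.
      * intros y Hy. destruct (H2 y Hy) as [x [Hx Hxy]]. exists x. rewrite Ha. split; auto.
        apply HI'; auto.
Qed.

Lemma FV_EqvF T : forall k (a b : term T) v, FV (EqvF T k a b) v -> tFV a v \/ tFV b v.
Proof.
  induction T; intros k a b v; simpl; auto; try tauto.
  - intros [H|H]; [apply IHT1 in H|apply IHT2 in H]; simpl in H; tauto.
  - intros [[H|[[H|[H1 H2]] H3]]|[H|[[H|[H1 H2]] H3]]]; auto;
      apply IHT in H1; simpl in H1; destruct H1; subst; congruence.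
Qed.

Definition Mem (m : nat) (T : ty) (u : term (TSet T)) : formula :=
  fEx (S m) T u (EqvF T (S (S m)) (tvar m T) (tvar (S m) T)).

Lemma Mem_sem A (e : env A) m T u :
  sat e (Mem m T u) <-> exists a, teval e u a /\ eqv T (e m T) a.
Proof.
  unfold Mem; simpl. split; intros [a [Ha Hb]]; exists a; split; auto.
  - rewrite EqvF_sem in Hb by (simpl; intros v [Hv|Hv]; subst; simpl; lia). simpl in Hb.
    rewrite upd_same, upd_other in Hb by (intro E; injection E; lia). auto.
  - rewrite EqvF_sem by (simpl; intros v [Hv|Hv]; subst; simpl; lia). simpl.
    rewrite upd_same, upd_other by (intro E; injection E; lia). auto.
Qed.

Lemma FV_Mem m T u v : FV (Mem m T u) v -> tFV u v \/ v = (m,T).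
Proof.
  unfold Mem; simpl. intros [H|[H1 H2]]; auto. apply FV_EqvF in H1. simpl in H1.
  destruct H1; subst; auto. congruence.
Qed.

Record fact : Type := mkFact { fside : bool; fm : nat; fT : ty; ft : term (TSet fT) }.

Definition fsat {A} (e : env A) (f : fact) : Prop := teval e (ft f) (e (fm f) (fT f)).
Definition fvars (f : fact) (v : var) : Prop := v = (fm f, fT f) \/ tFV (ft f) v.

Definition LangD (D : list formula) (v : var) : Prop := exists phi, In phi D /\ FV phi v.
Definition LangP (P : list fact) (v : var) : Prop := exists f, In f P /\ fvars f v.
Definition Lang P D v := LangD D v \/ LangP P v.
Definition factsat {A} (e : env A) (P : list fact) := forall f, In f P -> fsat e f.
Definition somesat {A} (e : env A) (D : list formula) := exists phi, In phi D /\ sat e phi.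

Definition Interp (PL PR : list fact) (DL DR : list formula) : Prop :=
  exists theta : formula,
    (forall v, FV theta v -> Lang PL DL v /\ Lang PR DR v) /\
    (forall A (e : env A), factsat e PL -> somesat e DL \/ sat e theta) /\
    (forall A (e : env A), factsat e PR -> somesat e DR \/ ~ sat e theta).

Lemma Interp_swap PL PR DL DR : Interp PR PL DR DL -> Interp PL PR DL DR.
Proof.
  intros [th [Hfv [H1 H2]]]. exists (neg th). split; [|split].
  - intros v Hv. rewrite FV_neg in Hv. destruct (Hfv v Hv); auto.
  - intros A e HP. destruct (H2 A e HP); [left; auto|right; apply sat_neg; auto].
  - intros A e HP. destruct (H1 A e HP); [left; auto|right; rewrite sat_neg; tauto].
Qed.

Lemma Interp_ext PL PR DL DR PL' PR' DL' DR' :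
  (forall x, In x PL -> In x PL') -> (forall x, In x PL' -> In x PL) ->
  (forall x, In x PR -> In x PR') -> (forall x, In x PR' -> In x PR) ->
  (forall x, In x DL -> In x DL') -> (forall x, In x DL' -> In x DL) ->
  (forall x, In x DR -> In x DR') -> (forall x, In x DR' -> In x DR) ->
  Interp PL PR DL DR -> Interp PL' PR' DL' DR'.
Proof.
  intros a1 a2 b1 b2 c1 c2 d1 d2 [th [Hfv [H1 H2]]]. exists th. split; [|split].
  - intros v Hv. destruct (Hfv v Hv) as [[[p [Hp Hq]]|[f [Hf Hg]]] [[p' [Hp' Hq']]|[f' [Hf' Hg']]]];
      split; first [left; eexists; split; eauto; fail | right; eexists; split; eauto].
  - intros A e HP. destruct (H1 A e) as [[p [Hp Hq]]|Hs]; [intros f Hf; auto| left; exists p; auto | auto].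
  - intros A e HP. destruct (H2 A e) as [[p [Hp Hq]]|Hs]; [intros f Hf; auto| left; exists p; auto | auto].
Qed.

Lemma fsat_upd_fresh A (e : env A) n T a f :
  (forall v, fvars f v -> v <> (n,T)) -> (fsat (upd e n T a) f <-> fsat e f).
Proof.
  intros H. unfold fsat. rewrite teval_upd_fresh by (intros v Hv; apply H; right; auto).
  rewrite upd_other by (intro E; apply (H (fm f, fT f)); [left; auto| auto]). tauto.
Qed.

Lemma upd_self A (e : env A) n T : forall m S, upd e n T (e n T) m S = e m S.
Proof.
  intros m S. destruct (var_eq_dec (n,T) (m,S)) as [E|E].
  - injection E; intros; subst. rewrite upd_same; auto.
  - rewrite upd_other; auto.
Qed.

Lemma rule_top_L PL PR DL DR : In fTop DL -> Interp PL PR DL DR.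
Proof.
  intros H. exists fBot. split; [|split]; simpl; try tauto.
  intros A e _. left. exists fTop. simpl; auto.
Qed.

Lemma rule_or_L PL PR DL DR a b : In (fOr a b) DL ->
  Interp PL PR (a :: b :: DL) DR -> Interp PL PR DL DR.
Proof.
  intros Hin [th [Hfv [H1 H2]]]. exists th. split; [|split]; auto.
  - intros v Hv. destruct (Hfv v Hv) as [HL HR]. split; auto.
    destruct HL as [[p [[<-|[<-|Hp]] Hq]]|?].
    + left; exists (fOr a b); simpl; auto.
    + left; exists (fOr a b); simpl; auto.
    + left; exists p; auto.
    + right; auto.
  - intros A e HP. destruct (H1 A e HP) as [[p [[<-|[<-|Hp]] Hq]]|?]; auto.
    + left; exists (fOr a b); simpl; auto.
    + left; exists (fOr a b); simpl; auto.
    + left; exists p; auto.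
Qed.

Lemma rule_and_L PL PR DL DR a b : In (fAnd a b) DL ->
  Interp PL PR (a :: DL) DR -> Interp PL PR (b :: DL) DR -> Interp PL PR DL DR.
Proof.
  intros Hin [th1 [Hfv1 [H11 H12]]] [th2 [Hfv2 [H21 H22]]]. exists (fOr th1 th2). split; [|split].
  - intros v [Hv|Hv]; [destruct (Hfv1 v Hv) as [HL HR] | destruct (Hfv2 v Hv) as [HL HR]]; split; auto;
    (destruct HL as [[p [[<-|Hp] Hq]]|?]; [left; exists (fAnd a b); simpl; auto | left; eexists; eauto | right; auto]).
  - intros A e HP. destruct (H11 A e HP) as [[p [[<-|Hp] Hq]]|?]; [| left; eexists; eauto | right; simpl; auto].
    destruct (H21 A e HP) as [[p' [[<-|Hp'] Hq']]|?]; [| left; eexists; eauto | right; simpl; auto].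
    left; exists (fAnd a b); simpl; auto.
  - intros A e HP. destruct (H12 A e HP); auto. destruct (H22 A e HP); auto. right; simpl; tauto.
Qed.

Lemma LangD_in D phi v : In phi D -> FV phi v -> Lang [] D v \/ False.
Proof. intros; left; left; eexists; eauto. Qed.

Lemma rule_all_L PL PR DL DR n T t p m s :
  In (fAll n T t p) DL -> ~ Lang PL DL (m,T) -> ~ Lang PR DR (m,T) -> ~ bnd p (m,T) ->
  Interp (mkFact s m T t :: PL) PR (ren n T m p :: DL) DR -> Interp PL PR DL DR.
Proof.
  intros Hin HfL HfR Hb [th [Hfv [H1 H2]]].
  assert (HinL : forall v, FV (fAll n T t p) v -> Lang PL DL v) by (intros; left; eexists; eauto).
  exists th. split; [|split]; auto.
  - intros v Hv. destruct (Hfv v Hv) as [HL HR]. split; auto.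
    assert (Hvm : v <> (m,T)) by (intro; subst; auto).
    destruct HL as [[q [[<-|Hq] Hq2]]|[f [[<-|Hf] Hf2]]].
    + apply FV_ren in Hq2. destruct Hq2 as [[? ?]|?]; [|congruence]. apply HinL; simpl; auto.
    + left; eexists; eauto.
    + destruct Hf2 as [?|?]; [simpl in *; congruence|]. apply HinL; simpl; auto.
    + right; eexists; eauto.
  - intros A e HP. destruct (classic (somesat e DL)) as [Hs|Hs]; auto.
    destruct (classic (sat e th)) as [Ht|Ht]; auto. exfalso. apply Hs.
    exists (fAll n T t p). split; auto. simpl. intros a Ha.
    assert (HP' : factsat (upd e m T a) (mkFact s m T t :: PL)).
    { intros f [<-|Hf].
      - unfold fsat; simpl. rewrite upd_same, teval_upd_fresh; auto.
        intros v Hv E; subst. apply HfL, HinL. simpl; auto.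
      - apply fsat_upd_fresh; [|auto]. intros v Hv E; subst. apply HfL. right; eexists; eauto. }
    destruct (H1 A _ HP') as [[q [[<-|Hq] Hq2]]|Ht'].
    + apply sat_ren in Hq2; auto. rewrite upd_same in Hq2.
      eapply sat_coinc; [|exact Hq2]. intros k S Hk.
      destruct (var_eq_dec (n,T) (k,S)) as [E|E].
      * injection E; intros; subst. rewrite !upd_same; auto.
      * rewrite !upd_other; auto. intro E2. apply HfL. rewrite E2. apply HinL. simpl. right; split; auto.
    + exfalso; apply Hs. exists q; split; auto. apply sat_upd_fresh in Hq2; auto.
      intros v Hv E; subst. apply HfL. left; eexists; eauto.
    + exfalso; apply Ht. apply sat_upd_fresh in Ht'; auto.
      intros v Hv E; subst. apply HfR. apply (Hfv _ Hv).
Qed.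

Lemma rule_ex_same_L PL PR DL DR n T t p m s t' :
  In (fEx n T t p) DL -> In (mkFact s m T t') PL -> tnorm t' = tnorm t -> ~ bnd p (m,T) ->
  Interp PL PR (ren n T m p :: DL) DR -> Interp PL PR DL DR.
Proof.
  intros Hin Hf Hk Hb [th [Hfv [H1 H2]]]. exists th. split; [|split]; auto.
  - intros v Hv. destruct (Hfv v Hv) as [HL HR]. split; auto.
    destruct HL as [[q [[<-|Hq] Hq2]]|?]; [| left; eexists; eauto | right; auto].
    apply FV_ren in Hq2. destruct Hq2 as [[? ?]|?].
    + left; exists (fEx n T t p); simpl; auto.
    + right; exists (mkFact s m T t'); split; auto. left; subst; auto.
  - intros A e HP. destruct (H1 A e HP) as [[q [[<-|Hq] Hq2]]|?]; auto.
    + left. exists (fEx n T t p). split; auto. simpl. exists (e m T). split.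
      * rewrite <- (key_eq _ e _ _ _ Hk). apply (HP _ Hf).
      * apply sat_ren in Hq2; auto.
    + left; eexists; eauto.
Qed.

Lemma rule_ex_cross_L PL PR DL DR n T t p m s t' :
  In (fEx n T t p) DL -> In (mkFact s m T t') PR -> tnorm t' = tnorm t -> ~ bnd p (m,T) ->
  Interp PL PR (ren n T m p :: DL) DR -> Interp PL PR DL DR.
Proof.
  intros Hin Hf Hk Hb [th [Hfv [H1 H2]]].
  destruct (clean _ t) as [u [Hu1 [Hu2 Hu3]]].
  assert (HuL : forall v, tFV u v -> Lang PL DL v).
  { intros v Hv. apply Hu2, varsN_tnorm in Hv. left; exists (fEx n T t p); simpl; auto. }
  assert (HuR : forall v, tFV u v -> Lang PR DR v).
  { intros v Hv. apply Hu2 in Hv. rewrite <- Hk in Hv. apply varsN_tnorm in Hv.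
    right; exists (mkFact s m T t'); split; auto. right; auto. }
  assert (HmR : Lang PR DR (m,T)) by (right; exists (mkFact s m T t'); split; auto; left; auto).
  assert (HtR : forall A (e : env A), factsat e PR -> teval e u (e m T)).
  { intros A e HP. rewrite Hu3, <- (key_eq _ e _ _ _ Hk). apply (HP _ Hf). }
  destruct (classic (Lang PL DL (m,T))) as [HmL|HmL].
  - exists (fOr (neg (Mem m T u)) th). split; [|split].
    + intros v [Hv|Hv].
      * apply FV_neg, FV_Mem in Hv. destruct Hv as [Hv|Hv]; [split; auto| subst; auto].
      * destruct (Hfv v Hv) as [HL HR]. split; auto.
        destruct HL as [[q [[<-|Hq] Hq2]]|?]; [| left; eexists; eauto | right; auto].
        apply FV_ren in Hq2. destruct Hq2 as [[? ?]|?]; [|subst; auto].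
        left; exists (fEx n T t p); simpl; auto.
    + intros A e HP. destruct (classic (somesat e DL)) as [Hs|Hs]; auto. right.
      change (sat e (neg (Mem m T u)) \/ sat e th).
      destruct (H1 A e HP) as [[q [[<-|Hq] Hq2]]|?]; [| exfalso; apply Hs; eexists; eauto | simpl; auto].
      left. apply sat_neg. intros HM. apply Mem_sem in HM. destruct HM as [a [Ha Hea]].
      apply Hs. exists (fEx n T t p). split; auto. simpl. exists a. split; [rewrite <- (Hu3 A e); auto|].
      apply sat_ren in Hq2; auto. eapply sat_eqv; [|exact Hq2].
      apply eqv_env_upd; [intros k S; apply eqv_refl | auto].
    + intros A e HP. destruct (H2 A e HP); auto. right.
      change (~ (sat e (neg (Mem m T u)) \/ sat e th)). rewrite sat_neg.
      intros [HM|HM]; auto. apply HM. apply Mem_sem. exists (e m T). split; auto. apply eqv_refl.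
  - exists (fAll m T u th). split; [|split].
    + intros v [Hv|[Hv Hne]]; [split; auto|].
      destruct (Hfv v Hv) as [HL HR]. split; auto.
      destruct HL as [[q [[<-|Hq] Hq2]]|?]; [| left; eexists; eauto | right; auto].
      apply FV_ren in Hq2. destruct Hq2 as [[? ?]|?]; [|congruence].
      left; exists (fEx n T t p); simpl; auto.
    + intros A e HP. destruct (classic (somesat e DL)) as [Hs|Hs]; auto. right. simpl.
      intros a Ha.
      assert (HP' : factsat (upd e m T a) PL).
      { intros f Hf'. apply fsat_upd_fresh; [|auto]. intros v Hv E; subst. apply HmL. right; eexists; eauto. }
      destruct (H1 A _ HP') as [[q [[<-|Hq] Hq2]]|?]; auto.
      * exfalso. apply Hs. exists (fEx n T t p). split; auto. simpl. exists a.
        split; [rewrite <- (Hu3 A e); auto|].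
        apply sat_ren in Hq2; auto. rewrite upd_same in Hq2.
        eapply sat_coinc; [|exact Hq2]. intros k S Hk'.
        destruct (var_eq_dec (n,T) (k,S)) as [E|E].
        -- injection E; intros; subst. rewrite !upd_same; auto.
        -- rewrite !upd_other; auto. intro E2. apply HmL. rewrite E2.
           left; exists (fEx n T t p); simpl; auto.
      * exfalso. apply Hs. exists q; split; auto. apply sat_upd_fresh in Hq2; auto.
        intros v Hv E; subst. apply HmL. left; eexists; eauto.
    + intros A e HP. destruct (H2 A e HP); auto. right. simpl. intros Hall.
      specialize (Hall (e m T) (HtR A e HP)). apply H. apply (proj1 (sat_ext _ th _ e (upd_self _ e m T))). exact Hall.
Qed.

Lemma Interp_swap' PL PR DL DR : Interp PL PR DL DR -> Interp PR PL DR DL.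
Proof. apply Interp_swap. Qed.

Lemma rule_top_R PL PR DL DR : In fTop DR -> Interp PL PR DL DR.
Proof. intros. apply Interp_swap, rule_top_L; auto. Qed.

Lemma rule_or_R PL PR DL DR a b : In (fOr a b) DR ->
  Interp PL PR DL (a :: b :: DR) -> Interp PL PR DL DR.
Proof. intros. apply Interp_swap. eapply rule_or_L; eauto. apply Interp_swap; auto. Qed.

Lemma rule_and_R PL PR DL DR a b : In (fAnd a b) DR ->
  Interp PL PR DL (a :: DR) -> Interp PL PR DL (b :: DR) -> Interp PL PR DL DR.
Proof. intros. apply Interp_swap. eapply rule_and_L; eauto; apply Interp_swap; auto. Qed.

Lemma rule_all_R PL PR DL DR n T t p m s :
  In (fAll n T t p) DR -> ~ Lang PL DL (m,T) -> ~ Lang PR DR (m,T) -> ~ bnd p (m,T) ->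
  Interp PL (mkFact s m T t :: PR) DL (ren n T m p :: DR) -> Interp PL PR DL DR.
Proof. intros. apply Interp_swap. apply (rule_all_L _ _ _ _ n T t p m s); auto. apply Interp_swap; auto. Qed.

Lemma rule_ex_same_R PL PR DL DR n T t p m s t' :
  In (fEx n T t p) DR -> In (mkFact s m T t') PR -> tnorm t' = tnorm t -> ~ bnd p (m,T) ->
  Interp PL PR DL (ren n T m p :: DR) -> Interp PL PR DL DR.
Proof. intros. apply Interp_swap. apply (rule_ex_same_L _ _ _ _ n T t p m s t'); auto. apply Interp_swap; auto. Qed.

Lemma rule_ex_cross_R PL PR DL DR n T t p m s t' :
  In (fEx n T t p) DR -> In (mkFact s m T t') PL -> tnorm t' = tnorm t -> ~ bnd p (m,T) ->
  Interp PL PR DL (ren n T m p :: DR) -> Interp PL PR DL DR.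
Proof. intros. apply Interp_swap. apply (rule_ex_cross_L _ _ _ _ n T t p m s t'); auto. apply Interp_swap; auto. Qed.

Definition edgeS (D : list formula) (a b : nterm) : Prop :=
  exists t u, In (fNeq t u) D /\ ((a = tnorm t /\ b = tnorm u) \/ (a = tnorm u /\ b = tnorm t)).
Definition keyD (D : list formula) (c : nterm) : Prop :=
  exists t u, (In (fEq t u) D \/ In (fNeq t u) D) /\ (c = tnorm t \/ c = tnorm u).
Definition valeq {A} (e : env A) (a b : nterm) : Prop :=
  forall ua ub : term TUr, tnorm ua = a -> tnorm ub = b -> teval e ua = teval e ub.
Definition allF {A} (e : env A) (D : list formula) := forall phi, In phi D -> ~ sat e phi.

Lemma keyD_wit D c : keyD D c -> exists w : term TUr, tnorm w = c.
Proof. intros [t [u [_ [H|H]]]]; eauto. Qed.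

Lemma valeq_trans A (e : env A) a b c : (exists w : term TUr, tnorm w = b) ->
  valeq e a b -> valeq e b c -> valeq e a c.
Proof. intros [w Hw] H1 H2 ua uc Ha Hc. rewrite (H1 ua w), (H2 w uc); auto. Qed.

Lemma edge_valeq A (e : env A) D a b : edgeS D a b -> allF e D -> valeq e a b.
Proof.
  intros [t [u [Hin Hab]]] Hall ua ub Ha Hb.
  assert (E : teval e t = teval e u) by (apply NNPP; apply (Hall _ Hin)).
  destruct Hab as [[? ?]|[? ?]]; subst.
  - rewrite (key_eq _ e _ ua t), (key_eq _ e _ ub u); auto.
  - rewrite (key_eq _ e _ ua u), (key_eq _ e _ ub t); auto.
Qed.

Lemma edge_key D a b : edgeS D a b -> keyD D a /\ keyD D b.
Proof.
  intros [t [u [Hin Hab]]]. destruct Hab as [[? ?]|[? ?]]; subst; split;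
  exists t, u; split; auto.
Qed.

Lemma keyD_lang D c v : keyD D c -> varsN c v -> LangD D v.
Proof.
  intros [t [u [Hin Hc]]] Hv. destruct Hin as [Hin|Hin]; destruct Hc; subst;
  apply varsN_tnorm in Hv; eexists; split; eauto; simpl; auto.
Qed.

Lemma key_clean D c : keyD D c -> exists u : term TUr, tnorm u = c /\ (forall v, tFV u v -> varsN c v).
Proof.
  intros H. destruct (keyD_wit D c H) as [w Hw]. destruct (clean _ w) as [u [H1 [H2 _]]].
  exists u. subst. split; auto.
Qed.


Definition common (PL PR : list fact) (DL DR : list formula) (th : formula) :=
  forall v, FV th v -> Lang PL DL v /\ Lang PR DR v.

Definition modeA PL PR DL DR k0 c :=
  exists th, common PL PR DL DR th /\ keyD DL c /\
    (forall A (e : env A), allF e DL -> ~ sat e th -> valeq e k0 c) /\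
    (forall A (e : env A), allF e DR -> ~ sat e th).

Definition modeB PL PR DL DR k0 c :=
  exists th a, common PL PR DL DR th /\ keyD DL a /\ keyD DR a /\ keyD DR c /\
    (forall A (e : env A), allF e DL -> ~ sat e th -> valeq e k0 a) /\
    (forall A (e : env A), allF e DR -> ~ sat e th) /\
    (forall A (e : env A), allF e DR -> valeq e a c).

Lemma switchBA PL PR DL DR k0 c : keyD DL c -> modeB PL PR DL DR k0 c -> modeA PL PR DL DR k0 c.
Proof.
  intros HcL [th [a [Hc [HaL [HaR [HcR [H1 [H2 H3]]]]]]]].
  destruct (key_clean _ _ HaL) as [ua [Hua1 Hua2]].
  destruct (key_clean _ _ HcL) as [uc [Huc1 Huc2]].
  exists (fOr th (fNeq ua uc)). split; [|split; [|split]]; auto.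
  - intros v [Hv|[Hv|Hv]]; [apply Hc; auto| |].
    + apply Hua2 in Hv. split; left; [eapply (keyD_lang DL a)|eapply (keyD_lang DR a)]; eauto.
    + apply Huc2 in Hv. split; left; [eapply (keyD_lang DL c)|eapply (keyD_lang DR c)]; eauto.
  - intros A e HL Hn. simpl in Hn.
    assert (Hac : teval e ua = teval e uc) by (apply NNPP; tauto).
    apply valeq_trans with a; [eapply keyD_wit; eauto| apply H1; tauto |].
    intros wa wc Hwa Hwc. rewrite (key_eq _ e _ wa ua), Hac, (key_eq _ e _ uc wc); congruence.
  - intros A e HR. simpl. intros [Hs|Hs]; [apply (H2 A e HR); auto|].
    apply Hs. apply (H3 A e HR); auto.
Qed.

Lemma stepInv PL PR DL DR k0 c d :
  (modeA PL PR DL DR k0 c \/ modeB PL PR DL DR k0 c) ->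
  (edgeS DL c d \/ edgeS DR c d) ->
  (modeA PL PR DL DR k0 d \/ modeB PL PR DL DR k0 d).
Proof.
  intros HI He.
  assert (HA : modeA PL PR DL DR k0 c -> edgeS DL c d -> modeA PL PR DL DR k0 d).
  { intros [th [Hc [HcL [H1 H2]]]] HE. destruct (edge_key _ _ _ HE) as [_ HdL].
    exists th. split; [|split; [|split]]; auto.
    intros A e HL Hn. apply valeq_trans with c; [eapply keyD_wit; eauto | auto |].
    eapply edge_valeq; eauto. }
  destruct HI as [HI|HI]; destruct He as [HE|HE].
  - left; auto.
  - right. destruct HI as [th [Hc [HcL [H1 H2]]]]. destruct (edge_key _ _ _ HE) as [HcR HdR].
    exists th, c. split;[|split;[|split;[|split;[|split;[|split]]]]]; auto.
    intros A e HR. eapply edge_valeq; eauto.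
  - left. apply HA; auto. apply switchBA; auto. destruct (edge_key _ _ _ HE); auto.
  - right. destruct HI as [th [a [Hc [HaL [HaR [HcR [H1 [H2 H3]]]]]]]].
    destruct (edge_key _ _ _ HE) as [_ HdR].
    exists th, a. split;[|split;[|split;[|split;[|split;[|split]]]]]; auto. intros A e HR.
    apply valeq_trans with c; [eapply keyD_wit; eauto | auto |]. eapply edge_valeq; eauto.
Qed.

Lemma eq_axiom_L PL PR DL DR t0 u0 :
  In (fEq t0 u0) DL ->
  clos_refl_trans _ (fun a b => edgeS DL a b \/ edgeS DR a b) (tnorm t0) (tnorm u0) ->
  Interp PL PR DL DR.
Proof.
  intros Hin Hc. apply clos_rt_rtn1 in Hc.
  assert (HI : forall d, clos_refl_trans_n1 _ (fun a b => edgeS DL a b \/ edgeS DR a b) (tnorm t0) d ->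
             modeA PL PR DL DR (tnorm t0) d \/ modeB PL PR DL DR (tnorm t0) d).
  { intros d H. induction H.
    - left. exists fBot. split; [|split; [|split]].
      + intros v [].
      + exists t0, u0; auto.
      + intros A e _ _ ua ub H1 H2. apply key_eq; congruence.
      + intros; simpl; auto.
    - eapply stepInv; eauto. }
  assert (HA : modeA PL PR DL DR (tnorm t0) (tnorm u0)).
  { destruct (HI _ Hc) as [HA|HB]; auto. apply switchBA; auto. exists t0, u0; auto. }
  destruct HA as [th [Hcm [_ [H1 H2]]]].
  exists th. split; [|split]; auto.
  - intros A e _. destruct (classic (somesat e DL)) as [Hs|Hs]; auto.
    destruct (classic (sat e th)) as [Ht|Ht]; auto. exfalso.
    assert (HL : allF e DL) by (intros phi Hp Hsat; apply Hs; exists phi; auto).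
    apply (HL _ Hin). simpl. apply (H1 A e HL Ht); auto.
  - intros A e _. destruct (classic (somesat e DR)) as [Hs|Hs]; auto.
    right. apply H2. intros phi Hp Hsat; apply Hs; exists phi; auto.
Qed.

Lemma eq_axiom_R PL PR DL DR t0 u0 :
  In (fEq t0 u0) DR ->
  clos_refl_trans _ (fun a b => edgeS DL a b \/ edgeS DR a b) (tnorm t0) (tnorm u0) ->
  Interp PL PR DL DR.
Proof.
  intros Hin Hc. apply Interp_swap. apply eq_axiom_L with t0 u0; auto.
  induction Hc.
  - apply rt_step. tauto.
  - apply rt_refl.
  - eapply rt_trans; eauto.
Qed.

From Stdlib Require Import Bool.

Definition state : Type := (list fact * list (bool * formula) * nat)%type.
Definition Pof (st : state) := fst (fst st).
Definition Qof (st : state) := snd (fst st).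
Definition kof (st : state) := snd st.

Definition formsOf (b : bool) (Q : list (bool * formula)) : list formula :=
  map snd (filter (fun p => Bool.eqb (fst p) b) Q).
Definition factsOf (b : bool) (P : list fact) : list fact :=
  filter (fun f => Bool.eqb (fside f) b) P.

Lemma In_formsOf b Q phi : In phi (formsOf b Q) <-> In (b,phi) Q.
Proof.
  unfold formsOf. rewrite in_map_iff. split.
  - intros [[b' x] [E H]]. simpl in E; subst. apply filter_In in H. destruct H as [H1 H2].
    simpl in H2. apply Bool.eqb_prop in H2. subst; auto.
  - intros H. exists (b,phi). split; auto. apply filter_In. split; auto. simpl. apply Bool.eqb_reflx.
Qed.

Lemma In_factsOf b P f : In f (factsOf b P) <-> In f P /\ fside f = b.
Proof.
  unfold factsOf. rewrite filter_In. split; intros [H1 H2]; split; auto.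
  - apply Bool.eqb_prop; auto.
  - subst; apply Bool.eqb_reflx.
Qed.

Definition InterpS (st : state) : Prop :=
  Interp (factsOf true (Pof st)) (factsOf false (Pof st)) (formsOf true (Qof st)) (formsOf false (Qof st)).

Definition matchf (T : ty) (t : term (TSet T)) (g : fact) : bool :=
  if ty_eq_dec (fT g) T then if nterm_eq_dec (tnorm (ft g)) (tnorm t) then true else false else false.

Lemma matchf_spec T t g : matchf T t g = true ->
  exists s m t', g = mkFact s m T t' /\ tnorm t' = tnorm t.
Proof.
  destruct g as [s m T' t']. unfold matchf; simpl.
  destruct (ty_eq_dec T' T); [|discriminate]. subst.
  destruct (nterm_eq_dec (tnorm t') (tnorm t)); [|discriminate]. intros _. eauto.
Qed.

Definition succ (N : nat) (st : state) : list state :=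
  match st with (P, Q, k) =>
  match Q with
  | [] => [(P, [], S k)]
  | (s, phi) :: rest =>
    let Q' := rest ++ [(s,phi)] in
    match phi with
    | fOr a b => [(P, Q' ++ [(s,a); (s,b)], S k)]
    | fAnd a b => [(P, Q' ++ [(s,a)], S k); (P, Q' ++ [(s,b)], S k)]
    | fAll n T t p => [(P ++ [mkFact s (N + k) T t], Q' ++ [(s, ren n T (N + k) p)], S k)]
    | fEx n T t p =>
        [(P, Q' ++ map (fun g => (s, ren n T (fm g) p)) (filter (matchf T t) P), S k)]
    | _ => [(P, Q', S k)]
    end
  end end.

Definition inv (N : nat) (st : state) : Prop :=
  (forall s phi v, In (s,phi) (Qof st) -> bnd phi v -> fst v < N) /\
  (forall s phi v, In (s,phi) (Qof st) -> FV phi v -> fst v < N + kof st) /\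
  (forall f v, In f (Pof st) -> fvars f v -> fst v < N + kof st) /\
  (forall f, In f (Pof st) -> N <= fm f).

Ltac inS := intros; repeat match goal with
  | H : In _ (formsOf _ _) |- _ => rewrite In_formsOf in H
  | |- In _ (formsOf _ _) => rewrite In_formsOf
  | H : In _ (factsOf _ _) |- _ => rewrite In_factsOf in H
  | |- In _ (factsOf _ _) => rewrite In_factsOf
  | H : In _ (_ ++ _) |- _ => rewrite in_app_iff in H
  | |- In _ (_ ++ _) => rewrite in_app_iff
  end; simpl in *.

Lemma succ_inv N st st' : inv N st -> In st' (succ N st) -> inv N st' /\ kof st' = S (kof st).
Proof.
  destruct st as [[P Q] k]. unfold inv, Pof, Qof, kof; simpl.
  intros [J1 [J2 [J3 J4]]] Hin.
  destruct Q as [|[s phi] rest].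
  - simpl in Hin. destruct Hin as [<-|[]]. simpl. repeat split; intros; try tauto.
    + apply (J3 f v) in H; auto. lia.
    + apply J4; auto.
  - assert (HJ1 : forall s' phi' v, In (s',phi') (rest ++ [(s,phi)]) -> bnd phi' v -> fst v < N).
    { intros s' phi' v H Hb. apply (J1 s' phi' v); auto. rewrite in_app_iff in H; simpl in *; tauto. }
    assert (HJ2 : forall s' phi' v, In (s',phi') (rest ++ [(s,phi)]) -> FV phi' v -> fst v < N + S k).
    { intros s' phi' v H Hb. enough (fst v < N + k) by lia. apply (J2 s' phi' v); auto.
      rewrite in_app_iff in H; simpl in *; tauto. }
    assert (HJ3 : forall f v, In f P -> fvars f v -> fst v < N + S k).
    { intros f v H1 H2. enough (fst v < N + k) by lia. eauto. }
    assert (Hb0 : forall v, bnd phi v -> fst v < N) by (intros; eapply J1; simpl; eauto).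
    assert (Hf0 : forall v, FV phi v -> fst v < N + k) by (intros; eapply J2; simpl; eauto).
    destruct phi; simpl in Hin;
      repeat (destruct Hin as [<-|Hin]; [|]); try contradiction;
      unfold inv, Pof, Qof, kof; simpl; (split; [|reflexivity]);
      (split; [|split; [|split]]).
    all: try (intros; eapply HJ1; eauto; fail).
    all: try (intros; eapply HJ2; eauto; fail).
    all: try (intros s' phi' v H Hb; rewrite in_app_iff in H; destruct H as [H|H];
              [first [eapply HJ1|eapply HJ2]; eauto; fail|]).
    all: try (simpl in H; repeat destruct H as [H|H]; try contradiction;
              try (injection H; intros; subst)).
    all: try (apply bnd_ren in Hb; apply Hb0; simpl; tauto).
    all: try (apply Hb0; simpl; tauto).
    all: try (assert (fst v < N + k) by (apply Hf0; simpl; tauto); lia).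
    all: try (apply FV_ren in Hb; destruct Hb as [[Hb Hne]|Hb];
              [assert (fst v < N + k) by (apply Hf0; simpl; tauto); lia | subst; simpl; lia]).
    all: try (apply in_map_iff in H; destruct H as [g [E Hg]]; injection E; intros; subst;
              apply filter_In in Hg; destruct Hg as [Hg Hm];
              apply matchf_spec in Hm; destruct Hm as [s0 [m0 [t0' [Hge Hkey]]]]; subst g;
              first [ apply bnd_ren in Hb; apply Hb0; simpl; tauto
                    | apply FV_ren in Hb; destruct Hb as [[Hb Hne]|Hb];
                      [assert (fst v < N + k) by (apply Hf0; simpl; tauto); lia
                      | subst; simpl; assert (fst (m0, T) < N + k) by (apply (J3 _ (m0,T) Hg); left; auto); simpl in *; lia]]).
    all: try (intros f v H Hv; eapply HJ3; eauto; fail).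
    all: try (intros f H; apply J4; auto; fail).
    all: try (intros f v H Hv; rewrite in_app_iff in H; simpl in H; destruct H as [H|[<-|[]]];
              [eapply HJ3; eauto| destruct Hv as [Hv|Hv]; [subst; simpl; lia|
               assert (fst v < N + k) by (apply Hf0; simpl; tauto); lia]]; fail).
    all: try (intros f H; rewrite in_app_iff in H; simpl in H; destruct H as [H|[<-|[]]];
              [apply J4; auto| simpl; lia]; fail).
    all: try (intros; eapply HJ1; eauto; fail).
    all: try (intros; eapply HJ2; eauto; fail).
    all: idtac.
Qed.

Lemma ex_many_L P DL DR n T t p gs :
  In (fEx n T t p) DL ->
  (forall g, In g gs -> In g P /\ matchf T t g = true /\ ~ bnd p (fm g, T)) ->
  Interp (factsOf true P) (factsOf false P) (map (fun g => ren n T (fm g) p) gs ++ DL) DR ->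
  Interp (factsOf true P) (factsOf false P) DL DR.
Proof.
  intros Hin. induction gs as [|g gs IH]; simpl; intros Hg H; auto.
  destruct (Hg g (or_introl eq_refl)) as [HgP [Hm Hb]].
  apply matchf_spec in Hm. destruct Hm as [s' [m [t' [-> Hk]]]]. simpl in Hb.
  apply IH; [intros; apply Hg; auto|].
  destruct s'.
  - eapply rule_ex_same_L with (s := true) (t' := t'); eauto.
    + apply in_app_iff; auto.
    + apply In_factsOf; auto.
  - eapply rule_ex_cross_L with (s := false) (t' := t'); eauto.
    + apply in_app_iff; auto.
    + apply In_factsOf; auto.
Qed.

Lemma ex_many_R P DL DR n T t p gs :
  In (fEx n T t p) DR ->
  (forall g, In g gs -> In g P /\ matchf T t g = true /\ ~ bnd p (fm g, T)) ->
  Interp (factsOf true P) (factsOf false P) DL (map (fun g => ren n T (fm g) p) gs ++ DR) ->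
  Interp (factsOf true P) (factsOf false P) DL DR.
Proof.
  intros Hin. induction gs as [|g gs IH]; simpl; intros Hg H; auto.
  destruct (Hg g (or_introl eq_refl)) as [HgP [Hm Hb]].
  apply matchf_spec in Hm. destruct Hm as [s' [m [t' [-> Hk]]]]. simpl in Hb.
  apply IH; [intros; apply Hg; auto|].
  destruct s'.
  - eapply rule_ex_cross_R with (s := true) (t' := t'); eauto.
    + apply in_app_iff; auto.
    + apply In_factsOf; auto.
  - eapply rule_ex_same_R with (s := false) (t' := t'); eauto.
    + apply in_app_iff; auto.
    + apply In_factsOf; auto.
Qed.

Opaque formsOf factsOf.

Ltac disj := match goal with
 | |- _ \/ _ => first [left; disj | right; disj]
 | _ => solve [congruence | auto | tauto | simpl; tauto | simpl; auto]
end.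

Ltac solve_in_core :=
  let x := fresh "x" in let Hx := fresh "Hx" in
  intros x Hx;
  repeat (rewrite In_formsOf in * || rewrite In_factsOf in * || rewrite in_app_iff in * );
  simpl in *;
  repeat (rewrite In_formsOf in * || rewrite In_factsOf in * || rewrite in_app_iff in * );
  simpl in *;
  intuition;
  repeat (match goal with H : (_,_) = (_,_) |- _ => inversion H; clear H end
          || match goal with H : ?a = ?y |- _ => is_var y; subst y end
          || match goal with H : ?y = ?a |- _ => is_var y; subst y end);
  simpl in *; try disj.

Ltac solve_in := solve [solve_in_core].

Lemma formsOf_ex b s h rest (F : fact -> formula) gs x :
  In x (formsOf b ((rest ++ [h]) ++ map (fun g => (s, F g)) gs)) <->
  In x (formsOf b (h :: rest)) \/ (b = s /\ In x (map F gs)).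
Proof.
  rewrite !In_formsOf, !in_app_iff. simpl. rewrite !in_map_iff. split.
  - intros [[H|[H|[]]]|[g [E Hg]]]; auto.
    injection E; intros; subst. right; split; auto. exists g; auto.
  - intros [[H|H]|[E [g [E2 Hg]]]]; auto. subst. right. exists g; auto.
Qed.

Lemma step_sound N st : inv N st -> (forall st', In st' (succ N st) -> InterpS st') -> InterpS st.
Proof.
  destruct st as [[P Q] k]. intros Hinv Hs.
  destruct Hinv as [J1 [J2 [J3 J4]]]. unfold Pof, Qof, kof in *; simpl in *.
  destruct Q as [|[s phi] rest].
  - specialize (Hs _ (or_introl eq_refl)). exact Hs.
  - unfold InterpS, Pof, Qof; simpl.
    assert (Hhd : In (s,phi) ((s,phi) :: rest)) by (left; auto).
    destruct phi; simpl in Hs;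
      try (specialize (Hs _ (or_introl eq_refl)); unfold InterpS, Pof, Qof in Hs; simpl in Hs;
           eapply Interp_ext; [| | | | | | | | exact Hs]; solve_in; fail).
    + specialize (Hs _ (or_introl eq_refl)); unfold InterpS, Pof, Qof in Hs; simpl in Hs.
      destruct s.
      * eapply rule_or_L; [apply In_formsOf; eauto|].
        eapply Interp_ext; [| | | | | | | | exact Hs]; solve_in.
      * eapply rule_or_R; [apply In_formsOf; eauto|].
        eapply Interp_ext; [| | | | | | | | exact Hs]; solve_in.
    + pose proof (Hs _ (or_introl eq_refl)) as H1. pose proof (Hs _ (or_intror (or_introl eq_refl))) as H2.
      unfold InterpS, Pof, Qof in H1, H2; simpl in H1, H2.
      destruct s.
      * eapply rule_and_L; [apply In_formsOf; eauto| |].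
        -- eapply Interp_ext; [| | | | | | | | exact H1]; solve_in.
        -- eapply Interp_ext; [| | | | | | | | exact H2]; solve_in.
      * eapply rule_and_R; [apply In_formsOf; eauto| |].
        -- eapply Interp_ext; [| | | | | | | | exact H1]; solve_in.
        -- eapply Interp_ext; [| | | | | | | | exact H2]; solve_in.
    + specialize (Hs _ (or_introl eq_refl)); unfold InterpS, Pof, Qof in Hs; simpl in Hs.
      assert (Hfr : forall s' D, (forall v, Lang (factsOf s' P) D v -> fst v < N + k) -> ~ Lang (factsOf s' P) D (N + k, T)).
      { intros s' D H Hl. apply H in Hl. simpl in Hl. lia. }
      assert (HL : forall s' v, Lang (factsOf s' P) (formsOf s' ((s, fAll n T t phi) :: rest)) v -> fst v < N + k).
      { intros s' v [[q [Hq Hq2]]|[f [Hf Hf2]]].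
        - rewrite In_formsOf in Hq. eapply J2; eauto.
        - rewrite In_factsOf in Hf. eapply J3; eauto; tauto. }
      assert (Hb : ~ bnd phi (N + k, T)).
      { intros Hb. assert (fst (N + k, T) < N) by (apply (J1 s (fAll n T t phi)); simpl; auto). simpl in *; lia. }
      destruct s.
      * eapply (rule_all_L _ _ _ _ n T t phi (N + k) true); [apply In_formsOf; eauto| | | auto |].
        -- apply Hfr. apply HL.
        -- apply Hfr. apply HL.
        -- eapply Interp_ext; [| | | | | | | | exact Hs]; solve_in.
      * eapply (rule_all_R _ _ _ _ n T t phi (N + k) false); [apply In_formsOf; eauto| | | auto |].
        -- apply Hfr. apply HL.
        -- apply Hfr. apply HL.
        -- eapply Interp_ext; [| | | | | | | | exact Hs]; solve_in.
    + specialize (Hs _ (or_introl eq_refl)); unfold InterpS, Pof, Qof in Hs; simpl in Hs.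
      set (gs := filter (matchf T t) P) in Hs.
      assert (Hgs : forall g, In g gs -> In g P /\ matchf T t g = true /\ ~ bnd phi (fm g, T)).
      { intros g Hg. apply filter_In in Hg. destruct Hg as [Hg Hm]. split; [|split]; auto.
        intros Hb. assert (fst (fm g, T) < N) by (apply (J1 s (fEx n T t phi)); simpl; auto).
        specialize (J4 g Hg). simpl in *; lia. }
      destruct s; [eapply (ex_many_L _ _ _ n T t phi gs) | eapply (ex_many_R _ _ _ n T t phi gs)];
        try (apply In_formsOf; eauto; fail); auto;
        (eapply Interp_ext; [| | | | | | | | exact Hs]; try solve_in);
        intros x Hx;
        first
        [ apply formsOf_ex in Hx; apply in_app_iff; destruct Hx as [Hx|[_ Hx]]; auto; fail
        | apply formsOf_ex in Hx; destruct Hx as [Hx|[Hx _]]; [auto|discriminate]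
        | apply formsOf_ex; apply in_app_iff in Hx; destruct Hx as [Hx|Hx]; auto; fail
        | apply formsOf_ex; auto ].
Qed.

Opaque formsOf factsOf.

Definition next (N : nat) (st : state) : state :=
  epsilon (inhabits st) (fun st' => In st' (succ N st) /\ ~ InterpS st').

Fixpoint sq (N : nat) (root : state) (k : nat) : state :=
  match k with 0 => root | S k => next N (sq N root k) end.

Lemma next_spec N st : inv N st -> ~ InterpS st -> In (next N st) (succ N st) /\ ~ InterpS (next N st).
Proof.
  intros Hi Hn. unfold next. apply epsilon_spec.
  apply NNPP. intros Hc. apply Hn. apply (step_sound N); auto.
  intros st' Hs. apply NNPP. intros Hn'. apply Hc. exists st'; auto.
Qed.

Lemma branch_ok N root : inv N root -> ~ InterpS root -> kof root = 0 ->
  forall k, inv N (sq N root k) /\ ~ InterpS (sq N root k) /\ kof (sq N root k) = k.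
Proof.
  intros H0 H1 H2. induction k as [|k [Ha [Hb Hc]]]; simpl; auto.
  destruct (next_spec N _ Ha Hb) as [Hs Hn].
  destruct (succ_inv N _ _ Ha Hs) as [Hi Hk]. split; [|split]; auto. rewrite Hk, Hc; auto.
Qed.

Lemma succ_shape N P h rest k st' : In st' (succ N (P, h :: rest, k)) ->
  (exists new, Qof st' = (rest ++ [h]) ++ new) /\ (forall f, In f P -> In f (Pof st')).
Proof.
  destruct h as [s phi]. intros H.
  destruct phi; simpl in H; repeat destruct H as [<-|H]; try contradiction;
    unfold Qof, Pof; simpl; split;
    try (eexists; rewrite ?app_nil_r; reflexivity); auto;
    try (exists []; rewrite app_nil_r; reflexivity).
  all: first [eexists; reflexivity | intros f Hf; apply in_app_iff; auto].
Qed.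

Lemma succ_head N P s phi rest k st' : In st' (succ N (P, (s,phi) :: rest, k)) ->
  match phi with
  | fOr a b => In (s,a) (Qof st') /\ In (s,b) (Qof st')
  | fAnd a b => In (s,a) (Qof st') \/ In (s,b) (Qof st')
  | fAll n T t p => In (mkFact s (N + k) T t) (Pof st') /\ In (s, ren n T (N + k) p) (Qof st')
  | fEx n T t p => forall g, In g P -> matchf T t g = true -> In (s, ren n T (fm g) p) (Qof st')
  | _ => True
  end.
Proof.
  intros H.
  destruct phi; simpl in H; repeat destruct H as [<-|H]; try contradiction;
    unfold Qof, Pof; simpl; auto.
  - split; apply in_app_iff; simpl; auto.
  - left; apply in_app_iff; simpl; auto.
  - right; apply in_app_iff; simpl; auto.
  - split; apply in_app_iff; simpl; auto.
  - intros g Hg Hm. apply in_app_iff. right. apply in_map_iff. exists g. split; auto.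
    apply filter_In; auto.
Qed.

Definition MA : Type := nterm -> Prop.

Definition edgeB (sqf : nat -> state) (a b : nterm) : Prop :=
  exists k s t u, In (s, fNeq t u) (Qof (sqf k)) /\ a = tnorm t /\ b = tnorm u.
Definition RB (sqf : nat -> state) := clos_refl_sym_trans nterm (edgeB sqf).

Fixpoint nval (sqf : nat -> state) (T : ty) : nterm -> interp MA T :=
  match T return nterm -> interp MA T with
  | TUr => fun n => fun b => RB sqf n b
  | TUnit => fun _ => tt
  | TProd T1 T2 => fun n =>
      match n with
      | NPair a b => (nval sqf T1 a, nval sqf T2 b)
      | NPath v bs => (nval sqf T1 (NPath v (bs ++ [true])), nval sqf T2 (NPath v (bs ++ [false])))
      | NUnit => (nval sqf T1 NUnit, nval sqf T2 NUnit)
      end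
  | TSet T1 => fun n => fun a => exists k f, In f (Pof (sqf k)) /\ fT f = T1 /\
                 tnorm (ft f) = n /\ a = nval sqf T1 (NPath (fm f, T1) [])
  end.

Definition menv (sqf : nat -> state) : env MA := fun n T => nval sqf T (NPath (n,T) []).

Lemma nval_prod sqf T1 T2 n : nval sqf (TProd T1 T2) n = (nval sqf T1 (nproj true n), nval sqf T2 (nproj false n)).
Proof. destruct n; reflexivity. Qed.

Lemma teval_menv sqf T (t : term T) : teval (menv sqf) t = nval sqf T (tnorm t).
Proof.
  induction t; simpl; auto; try (rewrite IHt1, IHt2; reflexivity);
    rewrite IHt; rewrite nval_prod; reflexivity.
Qed.

Lemma edgeS_sym D a b : edgeS D a b -> edgeS D b a.
Proof. intros [t [u [H [[? ?]|[? ?]]]]]; exists t, u; split; auto. Qed.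

Lemma crt_sym D1 D2 a b : clos_refl_trans _ (fun a b => edgeS D1 a b \/ edgeS D2 a b) a b ->
  clos_refl_trans _ (fun a b => edgeS D1 a b \/ edgeS D2 a b) b a.
Proof.
  intros H. induction H.
  - apply rt_step. destruct H; [left|right]; apply edgeS_sym; auto.
  - apply rt_refl.
  - eapply rt_trans; eauto.
Qed.

Lemma crt_mono D1 D2 D1' D2' a b :
  (forall x, In x D1 -> In x D1') -> (forall x, In x D2 -> In x D2') ->
  clos_refl_trans _ (fun a b => edgeS D1 a b \/ edgeS D2 a b) a b ->
  clos_refl_trans _ (fun a b => edgeS D1' a b \/ edgeS D2' a b) a b.
Proof.
  intros H1 H2 H. induction H.
  - apply rt_step. destruct H as [[t [u [Hi Hx]]]|[t [u [Hi Hx]]]]; [left|right]; exists t, u; auto.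
  - apply rt_refl.
  - eapply rt_trans; eauto.
Qed.

Opaque formsOf factsOf.

Definition good (N : nat) (sqf : nat -> state) : Prop :=
  (forall k, inv N (sqf k) /\ ~ InterpS (sqf k) /\ kof (sqf k) = k) /\
  (forall k, In (sqf (S k)) (succ N (sqf k))) /\
  (forall k, Qof (sqf k) <> []).

Lemma good_step N sqf k : good N sqf ->
  exists P h rest, sqf k = (P, h :: rest, k) /\
    (exists new, Qof (sqf (S k)) = (rest ++ [h]) ++ new) /\ (forall f, In f P -> In f (Pof (sqf (S k)))).
Proof.
  intros [G1 [G2 G3]]. destruct (sqf k) as [[P Q] kk] eqn:E.
  destruct (G1 k) as [_ [_ Hk]]. rewrite E in Hk. unfold kof in Hk; simpl in Hk. subst kk.
  destruct Q as [|h rest]. { exfalso. apply (G3 k). rewrite E. reflexivity. }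
  exists P, h, rest. split; auto. apply (succ_shape N P h rest k). rewrite <- E. apply G2.
Qed.

Lemma monoQ N sqf k x : good N sqf -> In x (Qof (sqf k)) -> In x (Qof (sqf (S k))).
Proof.
  intros G H. destruct (good_step N sqf k G) as [P [h [rest [E [[new Hn] _]]]]].
  rewrite E in H. unfold Qof in H; simpl in H. rewrite Hn. rewrite !in_app_iff. simpl. tauto.
Qed.

Lemma monoP N sqf k f : good N sqf -> In f (Pof (sqf k)) -> In f (Pof (sqf (S k))).
Proof.
  intros G H. destruct (good_step N sqf k G) as [P [h [rest [E [_ Hp]]]]].
  rewrite E in H. apply Hp. exact H.
Qed.

Lemma monoQ_le N sqf k k' x : good N sqf -> k <= k' -> In x (Qof (sqf k)) -> In x (Qof (sqf k')).
Proof. intros G H. induction H; auto. intros; eapply monoQ; eauto. Qed.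

Lemma monoP_le N sqf k k' x : good N sqf -> k <= k' -> In x (Pof (sqf k)) -> In x (Pof (sqf k')).
Proof. intros G H. induction H; auto. intros; eapply monoP; eauto. Qed.

Lemma position N sqf x : good N sqf -> forall i k pre post, Qof (sqf k) = pre ++ x :: post ->
  length pre = i -> exists post', Qof (sqf (i + k)) = x :: post'.
Proof.
  intros G. induction i as [|i IH]; intros k pre post H Hl.
  - destruct pre; [|discriminate]. simpl in *. exists post. exact H.
  - destruct pre as [|h pre']; [discriminate|]. simpl in Hl.
    destruct (good_step N sqf k G) as [P [h' [rest [E [[new Hn] _]]]]].
    rewrite E in H. unfold Qof in H; simpl in H. injection H; intros Hr Hh; subst.
    replace (S i + k) with (i + S k) by lia.
    apply (IH (S k) pre' (post ++ [h] ++ new)); [|lia].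
    rewrite Hn. rewrite <- !app_assoc. simpl. reflexivity.
Qed.

Lemma headAt N sqf x k : good N sqf -> In x (Qof (sqf k)) -> forall k0, exists K, k0 <= K /\
  exists rest, Qof (sqf K) = x :: rest.
Proof.
  intros G H k0. assert (H' : In x (Qof (sqf (Nat.max k k0)))) by (apply (monoQ_le N sqf k); auto; lia).
  apply in_split in H'. destruct H' as [pre [post Hp]].
  destruct (position N sqf x G _ _ _ _ Hp eq_refl) as [post' Hq].
  exists (length pre + Nat.max k k0). split; [lia|]. eauto.
Qed.

Lemma head_info N sqf K s phi rest : good N sqf -> Qof (sqf K) = (s,phi) :: rest ->
  exists P, Pof (sqf K) = P /\ sqf K = (P, (s,phi) :: rest, K) /\ In (sqf (S K)) (succ N (P, (s,phi) :: rest, K)).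
Proof.
  intros G H. destruct G as [G1 [G2 G3]]. destruct (sqf K) as [[P Q] kk] eqn:E.
  destruct (G1 K) as [_ [_ Hk]]. rewrite E in Hk. unfold kof in Hk; simpl in Hk. subst kk.
  unfold Qof in H; simpl in H; subst. exists P. split; auto. split; auto. rewrite <- E. apply G2.
Qed.

Lemma RB_stage N sqf a b : good N sqf -> RB sqf a b -> forall k0, exists K, k0 <= K /\
  clos_refl_trans _ (fun a b => edgeS (formsOf true (Qof (sqf K))) a b \/ edgeS (formsOf false (Qof (sqf K))) a b) a b.
Proof.
  intros G H. induction H; intros k0.
  - destruct H as [k [s [t [u [Hin [-> ->]]]]]]. exists (Nat.max k k0). split; [lia|].
    apply rt_step. assert (Hin' : In (s, fNeq t u) (Qof (sqf (Nat.max k k0)))) by (apply (monoQ_le N sqf k); auto; lia).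
    destruct s; [left|right]; exists t, u; split; auto; apply In_formsOf; auto.
  - exists k0. split; auto. apply rt_refl.
  - destruct (IHclos_refl_sym_trans k0) as [K [HK Hc]]. exists K. split; auto. apply crt_sym; auto.
  - destruct (IHclos_refl_sym_trans1 k0) as [K1 [HK1 Hc1]].
    destruct (IHclos_refl_sym_trans2 K1) as [K2 [HK2 Hc2]].
    exists K2. split; [lia|]. eapply rt_trans; [|exact Hc2].
    eapply crt_mono; [| | exact Hc1]; intros w1 Hw1; rewrite In_formsOf in *; apply (monoQ_le N sqf K1); auto.
Qed.

Lemma truth N sqf : good N sqf -> forall sz phi, fsize phi < sz -> forall k s,
  In (s,phi) (Qof (sqf k)) -> ~ sat (menv sqf) phi.
Proof.
  intros G. pose proof G as [G1 [G2 G3]].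
  induction sz as [|sz IH]; intros phi Hs k s Hin; [lia|].
  destruct phi; simpl.
  - intros Hsat. rewrite !teval_menv in Hsat. simpl in Hsat.
    assert (HR : RB sqf (tnorm t) (tnorm t0)).
    { apply (f_equal (fun f => f (tnorm t0))) in Hsat. rewrite Hsat. apply rst_refl. }
    destruct (RB_stage N sqf _ _ G HR k) as [K [HK Hc]].
    assert (Hin' : In (s, fEq t t0) (Qof (sqf K))) by (eapply monoQ_le; eauto).
    destruct (G1 K) as [_ [HnI _]]. apply HnI. unfold InterpS.
    destruct s.
    + eapply eq_axiom_L; [apply In_formsOf; eauto | exact Hc].
    + eapply eq_axiom_R; [apply In_formsOf; eauto | exact Hc].
  - intros Hsat. apply Hsat. rewrite !teval_menv. simpl.
    assert (HR : RB sqf (tnorm t) (tnorm t0)) by (apply rst_step; exists k, s, t, t0; auto).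
    apply functional_extensionality. intros c. apply propositional_extensionality. split; intros H.
    + eapply rst_trans; [apply rst_sym; exact HR | exact H].
    + eapply rst_trans; [exact HR | exact H].
  - intros _. destruct (G1 k) as [_ [HnI _]]. apply HnI. unfold InterpS.
    destruct s; [apply rule_top_L | apply rule_top_R]; apply In_formsOf; auto.
  - auto.
  - destruct (headAt N sqf _ _ G Hin k) as [K [HK [rest Hq]]].
    destruct (head_info N sqf K s _ rest G Hq) as [P [_ [_ Hsu]]].
    apply succ_head in Hsu. simpl in Hsu. destruct Hsu as [Ha Hb]. simpl in Hs.
    intros [Hx|Hx]; [eapply (IH phi1) | eapply (IH phi2)]; eauto; lia.
  - destruct (headAt N sqf _ _ G Hin k) as [K [HK [rest Hq]]].
    destruct (head_info N sqf K s _ rest G Hq) as [P [_ [_ Hsu]]].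
    apply succ_head in Hsu. simpl in Hsu. simpl in Hs.
    intros [Hx Hy]. destruct Hsu as [Ha|Hb]; [eapply (IH phi1) | eapply (IH phi2)]; eauto; lia.
  - destruct (headAt N sqf _ _ G Hin k) as [K [HK [rest Hq]]].
    destruct (head_info N sqf K s _ rest G Hq) as [P [_ [_ Hsu]]].
    apply succ_head in Hsu. destruct Hsu as [Hf Hr]. simpl in Hs.
    intros Hall.
    assert (Hb : ~ bnd phi (N + K, T)).
    { intros Hb. destruct (G1 K) as [[J1 _] _].
      assert (fst (N + K, T) < N) by (eapply (J1 s (fAll n T t phi)); [rewrite Hq; left; auto| simpl; right; auto]).
      simpl in *; lia. }
    apply (IH (ren n T (N + K) phi)) with (k := S K) (s := s); [rewrite fsize_ren; lia | exact Hr |].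
    apply sat_ren; auto. apply Hall.
    rewrite teval_menv. simpl. exists (S K), (mkFact s (N + K) T t). simpl. repeat split; auto.
  - intros [a [Ha Hp]]. rewrite teval_menv in Ha. simpl in Ha.
    destruct Ha as [k1 [f [Hf [HT [Hk Ha]]]]].
    destruct f as [s' m T' t']. simpl in *. subst T'.
    destruct (headAt N sqf _ _ G Hin k1) as [K [HK [rest Hq]]].
    destruct (head_info N sqf K s _ rest G Hq) as [P [HP [_ Hsu]]].
    apply succ_head in Hsu.
    assert (HfK : In (mkFact s' m T t') P) by (rewrite <- HP; eapply monoP_le; eauto).
    assert (Hm : matchf T t (mkFact s' m T t') = true).
    { unfold matchf; simpl. destruct (ty_eq_dec T T); [|congruence].
      destruct (nterm_eq_dec (tnorm t') (tnorm t)); [reflexivity|congruence]. }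
    specialize (Hsu _ HfK Hm). simpl in Hsu, Hs.
    assert (Hb : ~ bnd phi (m, T)).
    { intros Hb. destruct (G1 K) as [[J1 [_ [_ J4]]] _].
      assert (fst (m, T) < N) by (eapply (J1 s (fEx n T t phi)); [rewrite Hq; left; auto| simpl; right; auto]).
      specialize (J4 _ (eq_ind_r (fun P => In _ P) HfK HP)). simpl in *; lia. }
    apply (IH (ren n T m phi)) with (k := S K) (s := s); [rewrite fsize_ren; lia | exact Hsu |].
    apply sat_ren; auto. subst a. exact Hp.
Qed.

Opaque formsOf factsOf.

Fixpoint tmax {T} (t : term T) : nat :=
  match t with
  | tvar n _ => n
  | tunit => 0
  | tpair _ _ a b => Nat.max (tmax a) (tmax b)
  | tpi1 _ _ a => tmax a
  | tpi2 _ _ a => tmax a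
  end.

Fixpoint fmax (phi : formula) : nat :=
  match phi with
  | fEq t u | fNeq t u => Nat.max (tmax t) (tmax u)
  | fTop | fBot => 0
  | fOr p q | fAnd p q => Nat.max (fmax p) (fmax q)
  | fAll n _ t p | fEx n _ t p => Nat.max n (Nat.max (tmax t) (fmax p))
  end.

Lemma tmax_FV T (t : term T) v : tFV t v -> fst v <= tmax t.
Proof. induction t; simpl; intros H; try subst; simpl; try lia; try (destruct H; [apply IHt1 in H|apply IHt2 in H]; lia); auto. Qed.

Lemma fmax_FV phi v : FV phi v -> fst v <= fmax phi.
Proof.
  induction phi; simpl; intros H; try tauto;
  repeat match goal with
  | H : _ \/ _ |- _ => destruct H
  | H : _ /\ _ |- _ => destruct H
  | H : tFV _ _ |- _ => apply tmax_FV in H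
  | H : FV _ _ |- _ => first [apply IHphi1 in H | apply IHphi2 in H | apply IHphi in H]
  end; lia.
Qed.

Lemma fmax_bnd phi v : bnd phi v -> fst v <= fmax phi.
Proof.
  induction phi; simpl; intros H; try tauto;
  repeat match goal with
  | H : _ \/ _ |- _ => destruct H
  | H : bnd _ _ |- _ => first [apply IHphi1 in H | apply IHphi2 in H | apply IHphi in H]
  end; try subst; simpl; lia.
Qed.

Lemma list_max_in l x : In x l -> x <= list_max l.
Proof.
  intros H. assert (Hf : Forall (fun k => k <= list_max l) l) by (apply list_max_le; lia).
  rewrite Forall_forall in Hf. auto.
Qed.

Theorem interp_complete (DL DR : list formula) : DR <> [] ->
  (forall A (e : env A), somesat e DL \/ somesat e DR) -> Interp [] [] DL DR.
Proof.
  intros HDR Hval. apply NNPP. intros Hn.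
  set (N := S (list_max (map fmax (DL ++ DR)))).
  set (root := ([] : list fact, map (fun p => (true, p)) DL ++ map (fun p => (false, p)) DR, 0) : state).
  assert (HinQ : forall s phi, In (s,phi) (Qof root) -> In phi (DL ++ DR)).
  { intros s phi H. unfold Qof, root in H; simpl in H. apply in_app_iff in H. apply in_app_iff.
    destruct H as [H|H]; apply in_map_iff in H; destruct H as [p [E Hp]]; injection E; intros; subst; auto. }
  assert (HmaxN : forall phi, In phi (DL ++ DR) -> fmax phi < N).
  { intros phi H. unfold N. apply Nat.lt_succ_r. apply list_max_in. apply in_map; auto. }
  assert (Hinv : inv N root).
  { unfold inv, Pof, Qof, kof, root; simpl. split; [|split; [|split]]; try tauto.
    - intros s phi v H Hb. apply fmax_bnd in Hb. specialize (HmaxN phi (HinQ s phi H)). lia.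
    - intros s phi v H Hb. apply fmax_FV in Hb. specialize (HmaxN phi (HinQ s phi H)). lia. }
  assert (HnI : ~ InterpS root).
  { intros HI. apply Hn. unfold InterpS in HI. eapply Interp_ext; [| | | | | | | | exact HI].
    all: intros x Hx; rewrite ?In_formsOf, ?In_factsOf in *; unfold Pof, Qof, root in *; simpl in *; try tauto.
    - rewrite in_app_iff, !in_map_iff in Hx. destruct Hx as [[p [E Hp]]|[p [E Hp]]]; congruence.
    - rewrite in_app_iff, !in_map_iff. left. exists x; auto.
    - rewrite in_app_iff, !in_map_iff in Hx. destruct Hx as [[p [E Hp]]|[p [E Hp]]]; congruence.
    - rewrite in_app_iff, !in_map_iff. right. exists x; auto. }
  set (sqf := sq N root).
  pose proof (branch_ok N root Hinv HnI eq_refl) as B.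
  assert (G2 : forall k, In (sqf (S k)) (succ N (sqf k))).
  { intros k. destruct (B k) as [Hi [Hni _]]. apply (next_spec N _ Hi Hni). }
  assert (G3 : forall k, Qof (sqf k) <> []).
  { induction k as [|k IH].
    - unfold sqf; simpl. unfold Qof, root; simpl. intros E. apply app_eq_nil in E.
      destruct E as [_ E]. destruct DR; [auto|discriminate].
    - destruct (sqf k) as [[P Q] kk] eqn:E. destruct Q as [|h rest]; [exfalso; apply IH; reflexivity|].
      pose proof (G2 k) as H. rewrite E in H. apply succ_shape in H. destruct H as [[new Hnew] _].
      rewrite Hnew. intros E2. apply app_eq_nil in E2. destruct E2 as [E2 _]. apply app_eq_nil in E2.
      destruct E2 as [_ E2]. discriminate. }
  assert (G : good N sqf) by (split; [exact B|split; auto]).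
  destruct (Hval MA (menv sqf)) as [[p [Hp Hs]]|[p [Hp Hs]]].
  - apply (truth N sqf G (S (fsize p)) p (Nat.lt_succ_diag_r _) 0 true); auto.
    unfold sqf; simpl. unfold Qof, root; simpl. apply in_app_iff. left. apply in_map_iff. exists p; auto.
  - apply (truth N sqf G (S (fsize p)) p (Nat.lt_succ_diag_r _) 0 false); auto.
    unfold sqf; simpl. unfold Qof, root; simpl. apply in_app_iff. right. apply in_map_iff. exists p; auto.
Qed.

Theorem mainTheorem3 (GammaL GammaR : list formula) (psi : formula) :
  entails (GammaL ++ GammaR) psi ->
  exists theta : formula,
    (forall v, FV theta v -> FVs GammaL v /\ (FVs GammaR v \/ FV psi v)) /\
    entails GammaL theta /\
    entails (GammaR ++ [theta]) psi.
Proof.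
  intros Hent.
  assert (HI : Interp [] [] (map neg GammaL) (map neg GammaR ++ [psi])).
  { apply interp_complete.
    - intros E. apply app_eq_nil in E. destruct E as [_ E]. discriminate.
    - intros A e. destruct (classic (exists g, In g (GammaL ++ GammaR) /\ ~ sat e g)) as [[g [Hg Hng]]|Hc].
      + apply in_app_iff in Hg. destruct Hg as [Hg|Hg].
        * left. exists (neg g). split; [apply in_map; auto| apply sat_neg; auto].
        * right. exists (neg g). split; [apply in_app_iff; left; apply in_map; auto| apply sat_neg; auto].
      + right. exists psi. split; [apply in_app_iff; right; left; auto|].
        apply Hent. intros g Hg. apply NNPP. intros Hng. apply Hc. eauto. }
  destruct HI as [th [Hfv [H1 H2]]]. exists th. split; [|split].
  - intros v Hv. destruct (Hfv v Hv) as [[[p [Hp Hq]]|[f1 [[] _]]] [[p' [Hp' Hq']]|[f2 [[] _]]]].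
    apply in_map_iff in Hp. destruct Hp as [g [<- Hg]]. rewrite FV_neg in Hq.
    split; [exists g; auto|].
    apply in_app_iff in Hp'. destruct Hp' as [Hp'|[<-|[]]]; [|right; auto].
    apply in_map_iff in Hp'. destruct Hp' as [g' [<- Hg']]. rewrite FV_neg in Hq'.
    left; exists g'; auto.
  - intros A e Hg. destruct (H1 A e) as [[p [Hp Hq]]|Ht]; [intros f []| |auto].
    apply in_map_iff in Hp. destruct Hp as [g [<- Hgg]]. apply sat_neg in Hq.
    exfalso; apply Hq; apply Hg; auto.
  - intros A e Hg. destruct (H2 A e) as [[p [Hp Hq]]|Ht]; [intros f []| |].
    + apply in_app_iff in Hp. destruct Hp as [Hp|[<-|[]]]; auto.
      apply in_map_iff in Hp. destruct Hp as [g [<- Hgg]]. apply sat_neg in Hq.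
      exfalso; apply Hq; apply Hg; apply in_app_iff; auto.
    + exfalso. apply Ht. apply Hg. apply in_app_iff; right; left; auto.
Qed.
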